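(* Let $m\ge1$. Then: (1) for every $h\in[0,2]$ the infimum defining $\delta_m(h)$ is attained, i.e. there is $P\in\mathfrak{P}_m(\Gamma)$ (equivalently a point $\phi^*\in\mathbb{R}^m$) with $\mathrm{mes}\{t\in\mathbb{T}:|P(e^{it})|\ge h\}=\delta_m(h)$; (2) $\delta_m(0)=2\pi$ and $\delta_m(2)=0$; (3) $\delta_m$ is strictly decreasing on $[0,2]$.
   Context: $\Gamma=\{e^{it}:t\in[0,2\pi]\}$ is the unit circle. $\mathfrak{P}_m(\Gamma)$ is the set of algebraic polynomials $P(z)=\prod_{j=1}^m(z-e^{i\phi_j})$, $\phi=(\phi_1,\dots,\phi_m)\in\mathbb{R}^m$, i.e. monic polynomials of degree $m$ all of whose zeros lie on $\Gamma$. $\mathbb{T}=[0,2\pi)$ with endpoints identified, with Lebesgue measure $\mathrm{mes}$. For $0\le h\le 2$, $\delta_m(h)=\inf\{\mathrm{mes}\{t\in\mathbb{T}:|P(e^{it})|\ge h\}:P\in\mathfrak{P}_m(\Gamma)\}$. Equivalently, with $g_m(t;\phi)=\prod_{j=1}^m 2\sin\frac{t-\phi_j}{2}$ (so $|g_m(t;\phi)|=|P(e^{it})|$), $\delta_m(h)=\inf_{\phi\in\mathbb{R}^m}\mathrm{mes}\{t\in[0,2\pi]:|g_m(t;\phi)|\ge h\}$. *)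

(* Defs.v *)
From Stdlib Require Import Reals.
Open Scope R_scope.

(* g_m(t;phi) = prod_{j=0}^{m-1} 2 sin((t - phi_j)/2); only phi 0..m-1 matter,
   so phi : nat -> R stands for a point of R^m. *)
Fixpoint gm (m : nat) (phi : nat -> R) (t : R) : R :=
  match m with
  | O => 1
  | S k => gm k phi t * (2 * sin ((t - phi k) / 2))
  end.

Definition superlevel (m : nat) (phi : nat -> R) (h : R) (t : R) : Prop :=
  0 <= t <= 2 * PI /\ h <= Rabs (gm m phi t).

Definition is_inf (E : R -> Prop) (x : R) : Prop :=
  (forall y, E y -> x <= y) /\ (forall z, (forall y, E y -> z <= y) -> z <= x).

Definition cover_length (S : R -> Prop) (l : R) : Prop :=
  exists a b : nat -> R,
    (forall n, a n <= b n) /\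
    (forall t, S t -> exists n, a n <= t <= b n) /\
    infinite_sum (fun n => b n - a n) l.

(* Lebesgue (outer) measure of S equals mu *)
Definition mes_is (S : R -> Prop) (mu : R) : Prop := is_inf (cover_length S) mu.

Definition delta_is (m : nat) (h d : R) : Prop :=
  is_inf (fun x => exists phi : nat -> R, mes_is (superlevel m phi h) x) d.

(* Main.v *)
Require Import Defs.
From Stdlib Require Import Reals Lra Lia Psatz ZArith Arith List Classical ClassicalEpsilon.
Open Scope R_scope.

Fixpoint fsum (N : nat) (f : nat -> R) : R :=
  match N with O => 0 | S k => fsum k f + f k end.

Lemma sum_f_R0_fsum : forall f n, sum_f_R0 f n = fsum (S n) f.
Proof. intros f n; induction n; simpl in *; [lra | rewrite IHn; lra]. Qed.

Lemma fsum_ext : forall N f g, (forall n, (n < N)%nat -> f n = g n) -> fsum N f = fsum N g.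
Proof. induction N; intros f g H; simpl; [lra|]. rewrite (IHN f g) by (intros; apply H; lia).
  rewrite H by lia; lra. Qed.

Lemma fsum_le : forall N f g, (forall n, (n < N)%nat -> f n <= g n) -> fsum N f <= fsum N g.
Proof. induction N; intros f g H; simpl; [lra|].
  assert (fsum N f <= fsum N g) by (apply IHN; intros; apply H; lia).
  assert (f N <= g N) by (apply H; lia). lra. Qed.

Lemma fsum_nonneg : forall N f, (forall n, (n < N)%nat -> 0 <= f n) -> 0 <= fsum N f.
Proof. intros. replace 0 with (fsum N (fun _ => 0)). apply fsum_le; auto.
  clear; induction N; simpl; lra. Qed.

Lemma fsum_plus : forall N f g, fsum N (fun n => f n + g n) = fsum N f + fsum N g.
Proof. induction N; intros; simpl; [lra|]. rewrite IHN; lra. Qed.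

Lemma fsum_scal : forall N c f, fsum N (fun n => c * f n) = c * fsum N f.
Proof. induction N; intros; simpl; [lra|]. rewrite IHN; lra. Qed.

Lemma fsum_const : forall N c, fsum N (fun _ => c) = INR N * c.
Proof. induction N; intros; simpl fsum; [simpl; lra|]. rewrite IHN, S_INR; lra. Qed.

Lemma fsum_mono_N : forall f N M, (N <= M)%nat -> (forall n, 0 <= f n) -> fsum N f <= fsum M f.
Proof. intros f N M H Hf; induction H; simpl; [lra|]. specialize (Hf m); lra. Qed.

Lemma infsum_cv : forall c l, infinite_sum c l <-> Un_cv (sum_f_R0 c) l.
Proof. intros; split; auto. Qed.

Lemma infsum_bound : forall c l, (forall n, 0 <= c n) -> infinite_sum c l ->
  forall N, fsum N c <= l.
Proof. intros c l Hc Hl N. destruct N.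
  - simpl. assert (0 <= sum_f_R0 c 0) by (simpl; auto).
    pose proof (growing_ineq (sum_f_R0 c) l). assert (sum_f_R0 c 0 <= l).
    { apply H0; auto. intro n; simpl; specialize (Hc (S n)); lra. } lra.
  - rewrite <- sum_f_R0_fsum. apply growing_ineq; auto. intro n; simpl; specialize (Hc (S n)); lra.
Qed.

Lemma infsum_ge0 : forall c l, (forall n, 0 <= c n) -> infinite_sum c l -> 0 <= l.
Proof. intros. pose proof (infsum_bound c l H H0 0). simpl in H1; lra. Qed.

Lemma infsum_le : forall c d l1 l2, (forall n, c n <= d n) -> infinite_sum c l1 -> infinite_sum d l2 -> l1 <= l2.
Proof. intros. apply (Rle_cv_lim (Un:=sum_f_R0 c) (Vn:=sum_f_R0 d)); auto.
  intro n; apply sum_Rle; auto. Qed.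

Lemma infsum_plus : forall c d l1 l2, infinite_sum c l1 -> infinite_sum d l2 ->
  infinite_sum (fun n => c n + d n) (l1 + l2).
Proof. intros. apply infsum_cv. eapply Un_cv_ext.
  2: apply CV_plus; [apply H | apply H0]. intro n; simpl. rewrite sum_plus; auto. Qed.

Lemma infsum_compare : forall c e l, (forall n, 0 <= c n <= e n) -> infinite_sum e l ->
  exists l', infinite_sum c l' /\ l' <= l.
Proof. intros c e l Hc He.
  assert (Hb : forall n, sum_f_R0 c n <= l).
  { intro n. rewrite sum_f_R0_fsum. apply Rle_trans with (fsum (S n) e).
    apply fsum_le; intros; apply Hc. apply infsum_bound; auto. intro k; specialize (Hc k); lra. }
  destruct (growing_cv (sum_f_R0 c)) as [l' Hl'].
  - intro n; simpl; specialize (Hc (S n)); lra.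
  - exists l; intros x [i ->]; auto.
  - exists l'; split; auto. apply (Rle_cv_lim (Un:=sum_f_R0 c) (Vn:=fun _ => l)); auto.
    intros eps Heps; exists O; intros; unfold R_dist; rewrite Rminus_diag, Rabs_R0; lra.
Qed.

Lemma infsum_finite : forall c N, (forall n, (N <= n)%nat -> c n = 0) -> infinite_sum c (fsum N c).
Proof. intros c N H eps Heps. exists N. intros n Hn. rewrite sum_f_R0_fsum.
  replace (fsum (S n) c) with (fsum N c). unfold R_dist; rewrite Rminus_diag, Rabs_R0; lra.
  assert (forall k, fsum (N + k) c = fsum N c).
  { induction k. rewrite Nat.add_0_r; auto. rewrite Nat.add_succ_r. simpl. rewrite IHk, H by lia. lra. }
  replace (S n) with (N + (S n - N))%nat by lia. rewrite H0; auto.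
Qed.

Definition ilv (c d : nat -> R) (n : nat) : R := if Nat.even n then c (Nat.div2 n) else d (Nat.div2 n).

Lemma fsum_ilv2 : forall c d N, fsum (2 * N) (ilv c d) = fsum N c + fsum N d.
Proof. intros c d N; induction N; [simpl; lra|].
  replace (2 * S N)%nat with (S (S (2 * N))) by lia.
  change (fsum (S (S (2*N))) (ilv c d)) with (fsum (2*N) (ilv c d) + ilv c d (2*N) + ilv c d (S (2*N))).
  change (fsum (S N) c) with (fsum N c + c N). change (fsum (S N) d) with (fsum N d + d N). rewrite IHN.
  unfold ilv. rewrite (Nat.even_succ (2*N)), Nat.odd_even, Nat.even_mul, Nat.div2_succ_double.
  replace (Nat.div2 (S (S (2 * N)))) with (S (Nat.div2 (2 * N))) by reflexivity.
  rewrite Nat.div2_double. simpl. lra.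
Qed.

Lemma fsum_ilv3 : forall c d N, fsum (S (2 * N)) (ilv c d) = fsum (S N) c + fsum N d.
Proof. intros. change (fsum (S (2*N)) (ilv c d)) with (fsum (2*N) (ilv c d) + ilv c d (2*N)).
  change (fsum (S N) c) with (fsum N c + c N).
  rewrite fsum_ilv2. unfold ilv. rewrite Nat.even_mul, Nat.div2_double. simpl. lra. Qed.

Lemma infsum_ilv : forall c d l1 l2, infinite_sum c l1 -> infinite_sum d l2 ->
  infinite_sum (ilv c d) (l1 + l2).
Proof. intros c d l1 l2 H1 H2 eps Heps.
  destruct (H1 (eps/2)) as [N1 HN1]; [lra|]. destruct (H2 (eps/2)) as [N2 HN2]; [lra|].
  exists (2 * (N1 + N2) + 2)%nat. intros n Hn. rewrite sum_f_R0_fsum.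
  destruct (Nat.Even_or_Odd (S n)) as [[k Hk]|[k Hk]].
  - rewrite Hk, fsum_ilv2. destruct k; [lia|]. rewrite <- !sum_f_R0_fsum.
    specialize (HN1 k ltac:(lia)). specialize (HN2 k ltac:(lia)).
    unfold R_dist in *. replace (sum_f_R0 c k + sum_f_R0 d k - (l1 + l2)) with
      ((sum_f_R0 c k - l1) + (sum_f_R0 d k - l2)) by ring.
    eapply Rle_lt_trans; [apply Rabs_triang|]. lra.
  - rewrite Hk. replace (2 * k + 1)%nat with (S (2 * k)) by lia. rewrite fsum_ilv3.
    destruct k; [lia|]. rewrite <- !sum_f_R0_fsum.
    specialize (HN1 (S k) ltac:(lia)). specialize (HN2 k ltac:(lia)).
    unfold R_dist in *. replace (sum_f_R0 c (S k) + sum_f_R0 d k - (l1 + l2)) with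
      ((sum_f_R0 c (S k) - l1) + (sum_f_R0 d k - l2)) by ring.
    eapply Rle_lt_trans; [apply Rabs_triang|]. lra.
Qed.

Lemma infsum_ext : forall c d l, (forall n, c n = d n) -> infinite_sum c l -> infinite_sum d l.
Proof. intros. apply infsum_cv. eapply Un_cv_ext; [|apply H0]. intro n.
  rewrite !sum_f_R0_fsum. apply fsum_ext; auto. Qed.

Lemma cover_ge0 : forall S l, cover_length S l -> 0 <= l.
Proof. intros S l [a [b [H1 [H2 H3]]]]. eapply infsum_ge0; [|eauto]. intro n; specialize (H1 n); lra. Qed.

Lemma cover_mono : forall S T l, (forall t, S t -> T t) -> cover_length T l -> cover_length S l.
Proof. intros S T l H [a [b [H1 [H2 H3]]]]. exists a, b; repeat split; auto. Qed.

Lemma cover_finite : forall (S : R -> Prop) N a b, (forall n, (n < N)%nat -> a n <= b n) ->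
  (forall t, S t -> exists n, (n < N)%nat /\ a n <= t <= b n) ->
  cover_length S (fsum N (fun n => b n - a n)).
Proof. intros S N a b Hab Hc.
  exists (fun n => if (n <? N)%nat then a n else 0), (fun n => if (n <? N)%nat then b n else 0).
  repeat split.
  - intro n; destruct (Nat.ltb_spec n N); [apply Hab; auto | lra].
  - intros t Ht; destruct (Hc t Ht) as [n [Hn Ht']]. exists n. destruct (Nat.ltb_spec n N); [auto|lia].
  - replace (fsum N (fun n => b n - a n)) with
      (fsum N (fun n => (if (n <? N)%nat then b n else 0) - (if (n <? N)%nat then a n else 0))).
    apply infsum_finite. intros n Hn. destruct (Nat.ltb_spec n N); [lia|lra].
    apply fsum_ext. intros n Hn. destruct (Nat.ltb_spec n N); [auto|lia].
Qed.

Lemma cover_union : forall A B la lb, cover_length A la -> cover_length B lb ->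
  cover_length (fun t => A t \/ B t) (la + lb).
Proof. intros A B la lb [a1 [b1 [H1 [H2 H3]]]] [a2 [b2 [K1 [K2 K3]]]].
  exists (ilv a1 a2), (ilv b1 b2). repeat split.
  - intro n; unfold ilv; destruct (Nat.even n); auto.
  - intros t [Ht|Ht].
    + destruct (H2 t Ht) as [n Hn]. exists (2 * n)%nat. unfold ilv.
      rewrite Nat.even_mul, Nat.div2_double. simpl; auto.
    + destruct (K2 t Ht) as [n Hn]. exists (S (2 * n))%nat. unfold ilv.
      rewrite Nat.even_succ, Nat.odd_even, Nat.div2_succ_double. simpl; auto.
  - eapply infsum_ext; [|apply infsum_ilv; [apply H3|apply K3]].
    intro n; unfold ilv; destruct (Nat.even n); auto.
Qed.

Lemma mes_exists : forall S, (exists l, cover_length S l) -> exists x, mes_is S x.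
Proof. intros S [l0 Hl0].
  destruct (completeness (fun y => cover_length S (- y))) as [m [Hm1 Hm2]].
  - exists 0. intros y Hy. apply cover_ge0 in Hy. lra.
  - exists (- l0). rewrite Ropp_involutive; auto.
  - exists (- m). split.
    + intros y Hy. assert (- y <= m) by (apply Hm1; rewrite Ropp_involutive; auto). lra.
    + intros z Hz. assert (m <= - z). { apply Hm2. intros y Hy. apply Hz in Hy. lra. } lra.
Qed.

Lemma mes_le_cover : forall S x l, mes_is S x -> cover_length S l -> x <= l.
Proof. intros S x l [H1 H2] H. apply H1; auto. Qed.

Lemma mes_ge0 : forall S x, mes_is S x -> (exists l, cover_length S l) -> 0 <= x.
Proof. intros S x [H1 H2] _. apply H2. intros y Hy; eapply cover_ge0; eauto. Qed.

Lemma mes_unique : forall S x y, mes_is S x -> mes_is S y -> x = y.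
Proof. intros S x y [H1 H2] [K1 K2]. apply Rle_antisym; [apply K2 | apply H2]; auto. Qed.

Lemma mes_mono : forall S T x y, (forall t, S t -> T t) -> mes_is S x -> mes_is T y -> x <= y.
Proof. intros S T x y H [H1 H2] [K1 K2]. apply K2. intros l Hl. apply H1.
  eapply cover_mono; eauto. Qed.

Lemma mes_ext : forall S T x, (forall t, S t <-> T t) -> mes_is S x -> mes_is T x.
Proof. intros S T x H [H1 H2]. split.
  - intros y Hy. apply H1. eapply cover_mono; [|eauto]. intros; apply H; auto.
  - intros z Hz. apply H2. intros y Hy. apply Hz. eapply cover_mono; [|eauto]. intros; apply H; auto.
Qed.

Lemma mes_sub : forall S A B x a b, (forall t, S t -> A t \/ B t) -> mes_is S x -> mes_is A a ->
  mes_is B b -> x <= a + b.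
Proof. intros S A B x a b H Hx [Ha1 Ha2] [Hb1 Hb2].
  assert (forall la lb, cover_length A la -> cover_length B lb -> x <= la + lb).
  { intros. eapply mes_le_cover; [eauto|]. eapply cover_mono; [apply H|]. apply cover_union; auto. }
  assert (forall lb, cover_length B lb -> x - lb <= a).
  { intros lb Hlb. apply Ha2. intros la Hla. specialize (H0 la lb Hla Hlb). lra. }
  assert (x - a <= b). { apply Hb2. intros lb Hlb. specialize (H1 lb Hlb). lra. } lra.
Qed.

Lemma cover_split : forall (A B : R -> Prop) c L, (forall t, A t -> t <= c) -> (forall t, B t -> c <= t) ->
  cover_length (fun t => A t \/ B t) L ->
  exists la lb, cover_length A la /\ cover_length B lb /\ la + lb <= L.
Proof. intros A B c L HA HB [a [b [H1 [H2 H3]]]].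
  set (bA := fun n => Rmax (a n) (Rmin (b n) c)). set (aB := fun n => Rmin (b n) (Rmax (a n) c)).
  assert (E1 : forall n, 0 <= bA n - a n <= b n - a n).
  { intro n; unfold bA, Rmax, Rmin; specialize (H1 n); repeat destruct Rle_dec; lra. }
  assert (E2 : forall n, 0 <= b n - aB n <= b n - a n).
  { intro n; unfold aB, Rmax, Rmin; specialize (H1 n); repeat destruct Rle_dec; lra. }
  assert (E3 : forall n, (bA n - a n) + (b n - aB n) <= b n - a n).
  { intro n; unfold aB, bA, Rmax, Rmin; specialize (H1 n); repeat destruct Rle_dec; lra. }
  destruct (infsum_compare _ _ _ E1 H3) as [la [Hla _]].
  destruct (infsum_compare _ _ _ E2 H3) as [lb [Hlb _]].
  exists la, lb. repeat split.
  - exists a, bA. repeat split; auto. intro n; specialize (E1 n); lra.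
    intros t Ht. destruct (H2 t (or_introl Ht)) as [n Hn]. exists n. specialize (HA t Ht).
    unfold bA, Rmax, Rmin; repeat destruct Rle_dec; lra.
  - exists aB, b. repeat split; auto. intro n; specialize (E2 n); lra.
    intros t Ht. destruct (H2 t (or_intror Ht)) as [n Hn]. exists n. specialize (HB t Ht).
    unfold aB, Rmax, Rmin; repeat destruct Rle_dec; lra.
  - eapply infsum_le; [apply E3 | apply infsum_plus; eauto | auto].
Qed.

Lemma mes_split : forall (A B : R -> Prop) c a b z, (forall t, A t -> t <= c) -> (forall t, B t -> c <= t) ->
  mes_is A a -> mes_is B b -> mes_is (fun t => A t \/ B t) z -> a + b <= z.
Proof. intros A B c a b z HA HB Ha Hb [Hz1 Hz2]. apply Hz2. intros L HL.
  destruct (cover_split A B c L HA HB HL) as [la [lb [H1 [H2 H3]]]].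
  pose proof (mes_le_cover _ _ _ Ha H1). pose proof (mes_le_cover _ _ _ Hb H2). lra.
Qed.

Lemma cover_bounded : forall (S : R -> Prop) p q, p <= q -> (forall t, S t -> p <= t <= q) ->
  cover_length S (q - p).
Proof. intros. replace (q - p) with (fsum 1 (fun _ => q - p)) by (simpl; lra).
  apply (cover_finite S 1 (fun _ => p) (fun _ => q)); auto.
  intros t Ht; exists O; split; auto.
Qed.

Lemma mes_bounded : forall (S : R -> Prop) p q, p <= q -> (forall t, S t -> p <= t <= q) ->
  exists x, mes_is S x.
Proof. intros. apply mes_exists. eexists; eapply cover_bounded; eauto. Qed.

Fixpoint lsum (l : list (R*R)) : R := match l with nil => 0 | p :: l' => (snd p - fst p) + lsum l' end.

Lemma lsum_app : forall l1 l2, lsum (l1 ++ l2) = lsum l1 + lsum l2.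
Proof. induction l1; intros; simpl; [lra|]. rewrite IHl1; lra. Qed.

Lemma lsum_nonneg : forall l, (forall p, In p l -> fst p < snd p) -> 0 <= lsum l.
Proof. induction l; intros H; simpl; [lra|].
  assert (fst a < snd a) by (apply H; left; auto).
  assert (0 <= lsum l) by (apply IHl; intros; apply H; right; auto). lra. Qed.

Lemma finite_open_cover : forall k l, (length l <= k)%nat -> (forall p, In p l -> fst p < snd p) ->
  forall a b, a <= b -> (forall t, a <= t <= b -> exists p, In p l /\ fst p < t < snd p) -> b - a < lsum l.
Proof. induction k; intros l Hlen Hpos a b Hab Hcov.
  - destruct l; [|simpl in Hlen; lia]. destruct (Hcov b) as [p [[] _]]; lra.
  - destruct (Hcov b) as [p [Hp [Hc Hd]]]; [lra|].
    destruct (in_split p l Hp) as [l1 [l2 ->]].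
    assert (Hpos' : forall p', In p' (l1 ++ l2) -> fst p' < snd p').
    { intros p' Hp'; apply Hpos. apply in_or_app. apply in_app_or in Hp'. simpl; tauto. }
    assert (Hs : lsum (l1 ++ p :: l2) = lsum (l1 ++ l2) + (snd p - fst p)).
    { rewrite !lsum_app. simpl. lra. }
    rewrite Hs. pose proof (lsum_nonneg _ Hpos').
    destruct (Rlt_or_le (fst p) a). { lra. }
    assert (fst p - a < lsum (l1 ++ l2)).
    { apply IHk; auto. rewrite length_app in *. simpl in Hlen. lia.
      intros t Ht. destruct (Hcov t) as [p' [Hp' Ht']]; [lra|]. exists p'. split; auto.
      apply in_app_or in Hp'. destruct Hp' as [Hp'|[Hp'|Hp']]; try (apply in_or_app; tauto).
      subst p'. lra. }
    lra.
Qed.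

Lemma lsum_map_seq : forall N (c d : nat -> R),
  lsum (map (fun n => (c n, d n)) (seq 0 N)) = fsum N (fun n => d n - c n).
Proof. induction N; intros; [simpl; auto|]. rewrite seq_S, map_app, lsum_app, IHN. simpl. lra. Qed.

Lemma finite_open_cover_nat : forall N (c d : nat -> R) a b, (forall n, c n < d n) -> a <= b ->
  (forall t, a <= t <= b -> exists n, (n < N)%nat /\ c n < t < d n) ->
  b - a < fsum N (fun n => d n - c n).
Proof. intros. rewrite <- lsum_map_seq. apply (finite_open_cover (length (map (fun n => (c n, d n)) (seq 0 N)))); auto.
  - intros p Hp. apply in_map_iff in Hp. destruct Hp as [n [<- _]]. simpl; auto.
  - intros t Ht. destruct (H1 t Ht) as [n [Hn Ht']]. exists (c n, d n). split; auto.
    apply in_map_iff. exists n; split; auto. apply in_seq; lia.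
Qed.

Lemma list_nat_bound : forall l : list R, exists N, forall n, In (INR n) l -> (n < N)%nat.
Proof. induction l. exists O; intros n []. destruct IHl as [N HN].
  destruct (classic (exists n, a = INR n)) as [[n0 ->]|Hn].
  - exists (Nat.max N (S n0)). intros n [H|H]. apply INR_eq in H; lia. specialize (HN n H); lia.
  - exists N. intros n [H|H]; [exfalso; apply Hn; eauto | auto].
Qed.

Fixpoint pow2 (n : nat) : R := match n with O => 1 | S k => 2 * pow2 k end.
Lemma pow2_pos : forall n, 0 < pow2 n.
Proof. induction n; simpl; lra. Qed.

Lemma fsum_geom : forall N, fsum N (fun n => / pow2 (S n)) = 1 - / pow2 N.
Proof. induction N. simpl; lra.
  change (fsum (S N) (fun n => / pow2 (S n))) with (fsum N (fun n => / pow2 (S n)) + / pow2 (S N)).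
  rewrite IHN. simpl pow2. pose proof (pow2_pos N). field. lra. Qed.

Lemma heine_borel : forall p q L, p <= q -> cover_length (fun t => p <= t <= q) L -> q - p <= L.
Proof. intros p q L Hpq [a [b [H1 [H2 H3]]]].
  destruct (Rle_or_lt (q - p) L) as [|HL]; auto. exfalso.
  set (eps := (q - p - L) / 2).
  set (w := fun n => / pow2 (S n)).
  assert (Hw : forall n, 0 < w n) by (intro n; unfold w; apply Rinv_0_lt_compat, pow2_pos).
  set (c := fun n => a n - eps * w n / 2). set (d := fun n => b n + eps * w n / 2).
  assert (Hcd : forall n, c n < d n).
  { intro n; unfold c, d. specialize (H1 n). specialize (Hw n). assert (0 < eps * w n) by (unfold eps; nra). lra. }
  set (F := {| Rtopology.ind := fun x => exists n, x = INR n;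
               Rtopology.f := fun x y => exists n, x = INR n /\ c n < y < d n;
               Rtopology.cond_fam := fun x (H : exists y, exists n, x = INR n /\ c n < y < d n) =>
                  match H with ex_intro _ y (ex_intro _ n (conj E _)) => ex_intro _ n E end |}).
  destruct (compact_P3 p q F) as [D [Hcov [l Hl]]].
  - split.
    + intros t Ht. destruct (H2 t Ht) as [n Hn]. exists (INR n). simpl. exists n. split; auto.
      specialize (Hw n). assert (0 < eps * w n) by (unfold eps; nra). unfold c, d; lra.
    + intros x y [n [Hx Hy]]. simpl in *.
      assert (Hd : 0 < Rmin (y - c n) (d n - y)) by (apply Rmin_pos; lra).
      exists (mkposreal _ Hd). intros z Hz. unfold Rtopology.disc in Hz; simpl in Hz.
      exists n. split; auto. pose proof (Rmin_l (y - c n) (d n - y)). pose proof (Rmin_r (y - c n) (d n - y)).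
      apply Rabs_def2 in Hz. lra.
  - destruct (list_nat_bound l) as [N HN].
    assert (q - p < fsum N (fun n => d n - c n)).
    { apply finite_open_cover_nat; auto. intros t Ht. destruct (Hcov t Ht) as [y [[n [-> Hn]] HD]].
      exists n; split; auto. apply HN. apply Hl. simpl. split; auto. exists n; auto. }
    assert (fsum N (fun n => d n - c n) = fsum N (fun n => b n - a n) + eps * fsum N w).
    { rewrite <- fsum_scal, <- fsum_plus. apply fsum_ext. intros; unfold c, d; lra. }
    assert (fsum N (fun n => b n - a n) <= L).
    { apply infsum_bound; auto. intro n; specialize (H1 n); lra. }
    assert (fsum N w <= 1). { unfold w. rewrite fsum_geom. pose proof (pow2_pos N).
      assert (0 < / pow2 N) by (apply Rinv_0_lt_compat; auto). lra. }
    assert (0 < eps) by (unfold eps; lra). unfold eps in *. nra.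
Qed.

Lemma mes_interval : forall p q, p <= q -> mes_is (fun t => p <= t <= q) (q - p).
Proof. intros p q Hpq. split.
  - intros y Hy. apply heine_borel; auto.
  - intros z Hz. apply Hz. apply cover_bounded; auto.
Qed.

Lemma mes_interval_sub : forall (S : R -> Prop) p q x, p <= q -> (forall t, p <= t <= q -> S t) ->
  mes_is S x -> q - p <= x.
Proof. intros. eapply (mes_mono (fun t => p <= t <= q) S); [| apply mes_interval; auto | auto]. auto. Qed.

Lemma sin_lip : forall x y, Rabs (sin x - sin y) <= Rabs (x - y).
Proof. intros. destruct (MVT_abs sin cos y x) as [c [Hc _]].
  { intros; apply derivable_pt_lim_sin. }
  rewrite Hc. pose proof (COS_bound c). assert (Rabs (cos c) <= 1) by (apply Rabs_le; lra).
  pose proof (Rabs_pos (x - y)). nra. Qed.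

Lemma fact_cont : forall c, continuity (fun t => 2 * sin ((t - c) / 2)).
Proof. intro c.
  assert (H1 : continuity (fun t => (t - c) / 2)).
  { apply (continuity_scal (fun t => t - c) (/2)) || idtac.
    change (fun t => (t - c) / 2) with (mult_real_fct (/2) (fun t => t - c)) || idtac.
    intro x. apply continuity_pt_mult. apply continuity_pt_minus. apply derivable_continuous_pt, derivable_pt_id.
    apply continuity_pt_const; intros a b; auto. apply continuity_pt_const; intros a b; auto. }
  intro x. apply continuity_pt_mult. apply continuity_pt_const; intros a b; auto.
  apply (continuity_pt_comp (fun t => (t - c) / 2) sin). apply H1. apply continuity_sin.
Qed.

Lemma gm_cont : forall m phi, continuity (gm m phi).
Proof. induction m; intros phi; simpl.
  - intro x; apply continuity_pt_const; intros a b; auto.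
  - intro x; apply continuity_pt_mult; [apply IHm | apply fact_cont].
Qed.

Lemma gm_abs_cont : forall m phi, continuity (fun t => Rabs (gm m phi t)).
Proof. intros m phi x. apply (continuity_pt_comp (gm m phi) Rabs). apply gm_cont. apply Rcontinuity_abs. Qed.

Lemma gm_bound : forall m phi t, Rabs (gm m phi t) <= 2 ^ m.
Proof. induction m; intros; simpl. rewrite Rabs_R1; lra.
  rewrite Rabs_mult, Rabs_mult, (Rabs_right 2) by lra.
  pose proof (SIN_bound ((t - phi m) / 2)). assert (Rabs (sin ((t - phi m) / 2)) <= 1) by (apply Rabs_le; lra).
  pose proof (IHm phi t). pose proof (Rabs_pos (gm m phi t)). pose proof (Rabs_pos (sin ((t - phi m) / 2))). nra.
Qed.

Lemma gm_lip : forall m phi psi t,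
  Rabs (gm m phi t - gm m psi t) <= 2 ^ m * fsum m (fun j => Rabs (phi j - psi j)).
Proof. induction m; intros; simpl.
  - rewrite Rminus_diag, Rabs_R0; lra.
  - set (a := gm m phi t). set (b := gm m psi t).
    set (x := 2 * sin ((t - phi m) / 2)). set (y := 2 * sin ((t - psi m) / 2)).
    replace (a * x - b * y) with ((a - b) * x + b * (x - y)) by ring.
    eapply Rle_trans; [apply Rabs_triang|]. rewrite !Rabs_mult.
    assert (Rabs x <= 2). { unfold x. rewrite Rabs_mult, Rabs_right by lra. pose proof (SIN_bound ((t - phi m) / 2)).
      assert (Rabs (sin ((t - phi m) / 2)) <= 1) by (apply Rabs_le; lra). lra. }
    assert (Rabs (x - y) <= Rabs (phi m - psi m)).
    { unfold x, y. replace (2 * sin ((t - phi m) / 2) - 2 * sin ((t - psi m) / 2)) with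
        (2 * (sin ((t - phi m) / 2) - sin ((t - psi m) / 2))) by ring. rewrite Rabs_mult, (Rabs_right 2) by lra.
      pose proof (sin_lip ((t - phi m) / 2) ((t - psi m) / 2)) as Hs.
      assert (E : Rabs ((t - phi m) / 2 - (t - psi m) / 2) = Rabs (phi m - psi m) * / 2).
      { replace ((t - phi m) / 2 - (t - psi m) / 2) with ((psi m - phi m) * / 2) by field.
        rewrite Rabs_mult, (Rabs_right (/2)) by lra. rewrite Rabs_minus_sym. auto. }
      rewrite E in Hs. lra. }
    pose proof (IHm phi psi t). fold a b in H1. pose proof (gm_bound m psi t). fold b in H2.
    assert (0 <= fsum m (fun j => Rabs (phi j - psi j))) by (apply fsum_nonneg; intros; apply Rabs_pos).
    pose proof (Rabs_pos (a - b)). pose proof (Rabs_pos b). pose proof (Rabs_pos (x - y)).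
    pose proof (pow_lt 2 m ltac:(lra)).
    assert (Rabs (a - b) * Rabs x <= 2 ^ m * fsum m (fun j => Rabs (phi j - psi j)) * 2).
    { apply Rmult_le_compat; auto. apply Rabs_pos. }
    assert (Rabs b * Rabs (x - y) <= 2 ^ m * Rabs (phi m - psi m)).
    { apply Rmult_le_compat; auto. }
    nra.
Qed.

Lemma gm_ext : forall m phi psi t, (forall j, (j < m)%nat -> phi j = psi j) -> gm m phi t = gm m psi t.
Proof. induction m; intros; simpl; auto. rewrite (IHm phi psi) by (intros; apply H; lia). rewrite H by lia. auto. Qed.

Lemma sin_shift_Z : forall x k, Rabs (sin (x + IZR k * PI)) = Rabs (sin x).
Proof. intros. rewrite sin_plus. rewrite (sin_eq_0_1 (IZR k * PI)) by eauto.
  assert (Hc : cos (IZR k * PI) ^ 2 = 1).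
  { pose proof (sin2_cos2 (IZR k * PI)). rewrite (sin_eq_0_1 (IZR k * PI)) in H by eauto. unfold Rsqr in H. nra. }
  rewrite Rmult_0_r, Rplus_0_r, Rabs_mult.
  assert (Rabs (cos (IZR k * PI)) = 1).
  { pose proof (Rabs_pos (cos (IZR k * PI))). assert (Rabs (cos (IZR k * PI)) ^ 2 = 1).
    { rewrite RPow_abs, Hc, Rabs_R1. auto. } nra. }
  rewrite H; ring.
Qed.

Lemma gm_abs_ext : forall m phi psi t s,
  (forall j, (j < m)%nat -> exists k : Z, (s - psi j) / 2 = (t - phi j) / 2 + IZR k * PI) ->
  Rabs (gm m psi s) = Rabs (gm m phi t).
Proof. induction m; intros; simpl; auto. rewrite !Rabs_mult.
  rewrite (IHm phi psi t s) by (intros; apply H; lia).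
  destruct (H m ltac:(lia)) as [k Hk]. rewrite Hk, sin_shift_Z. auto.
Qed.

Lemma reduce_real : forall x, exists k : Z, 0 <= x + IZR k * (2 * PI) < 2 * PI.
Proof. intros x. pose proof PI_RGT_0. destruct (archimed (x / (2 * PI))) as [H1 H2].
  exists (- (up (x / (2 * PI)) - 1))%Z. rewrite opp_IZR, minus_IZR.
  set (u := IZR (up (x / (2 * PI)))) in *.
  assert (x = x / (2 * PI) * (2 * PI)) by (field; lra).
  split; nra.
Qed.

Lemma reduce_phi : forall m phi, exists psi, (forall j, (j < m)%nat -> 0 <= psi j <= 2 * PI) /\
  forall t, Rabs (gm m psi t) = Rabs (gm m phi t).
Proof. intros m phi.
  exists (fun j => phi j + IZR (proj1_sig (constructive_indefinite_description _ (reduce_real (phi j)))) * (2 * PI))%R.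
  split.
  - intros j _. destruct (constructive_indefinite_description _ (reduce_real (phi j))) as [k Hk]. simpl. lra.
  - intro t. apply gm_abs_ext. intros j _.
    destruct (constructive_indefinite_description _ (reduce_real (phi j))) as [k Hk]. simpl.
    exists (- k)%Z. rewrite opp_IZR. field.
Qed.

Lemma gm_period : forall m phi t (k : Z), Rabs (gm m phi (t + IZR k * (2 * PI))) = Rabs (gm m phi t).
Proof. intros. apply gm_abs_ext. intros. exists k. field. Qed.

Lemma reduce_t : forall m phi t, exists s, 0 <= s <= 2 * PI /\ Rabs (gm m phi s) = Rabs (gm m phi t).
Proof. intros. destruct (reduce_real t) as [k Hk]. exists (t + IZR k * (2 * PI)). split; [lra|].
  apply gm_period. Qed.

Lemma gm_zero : forall m phi, (1 <= m)%nat -> exists t0, 0 <= t0 <= 2 * PI /\ gm m phi t0 = 0.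
Proof. intros m phi Hm.
  assert (gm m phi (phi O) = 0).
  { induction Hm; simpl. replace ((phi 0%nat - phi 0%nat) / 2) with 0 by field. rewrite sin_0. ring.
    rewrite IHHm. ring. }
  destruct (reduce_t m phi (phi O)) as [s [Hs Hs']]. exists s. split; auto.
  rewrite H, Rabs_R0 in Hs'. destruct (Req_dec (gm m phi s) 0); auto. apply Rabs_no_R0 in H0. lra.
Qed.

Definition fr (m j : nat) : R := INR m / 2 - INR j.

Inductive InW (m : nat) : (R -> R) -> Prop :=
| W0 : InW m (fun _ => 0)
| Wadd : forall f j a b, (1 <= j)%nat -> (j + 1 <= m)%nat -> InW m f ->
    InW m (fun t => f t + a * cos (fr m j * t) + b * sin (fr m j * t))
| Wext : forall f g, InW m f -> (forall t, f t = g t) -> InW m g.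

Lemma InW_plus : forall m f g, InW m f -> InW m g -> InW m (fun t => f t + g t).
Proof. intros m f g Hf Hg. induction Hg.
  - eapply Wext; [apply Hf|]. intro; simpl; lra.
  - eapply Wext; [apply (Wadd m (fun t => f t + f0 t) j a b); eauto|]. intro t; simpl; lra.
  - eapply Wext; [apply IHHg|]. intro t; simpl; rewrite H; auto.
Qed.

Lemma prod_to_sum_cs : forall X Y, 2 * cos X * sin Y = sin (X + Y) - sin (X - Y).
Proof. intros. rewrite sin_plus, sin_minus. ring. Qed.
Lemma prod_to_sum_ss : forall X Y, 2 * sin X * sin Y = cos (X - Y) - cos (X + Y).
Proof. intros. rewrite cos_plus, cos_minus. ring. Qed.

Lemma fr_S0 : forall m j t p, fr m j * t + (t - p) / 2 = fr (S m) j * t - p / 2.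
Proof. intros; unfold fr; rewrite S_INR; field. Qed.
Lemma fr_S1 : forall m j t p, fr m j * t - (t - p) / 2 = fr (S m) (S j) * t + p / 2.
Proof. intros; unfold fr; rewrite !S_INR; field. Qed.

Lemma InW_mul : forall m f p, InW m f -> InW (S m) (fun t => f t * (2 * sin ((t - p) / 2))).
Proof. intros m f p Hf. induction Hf.
  - eapply Wext; [apply W0|]. intro; simpl; ring.
  - set (cp := cos (p / 2)). set (sp := sin (p / 2)).
    eapply Wext.
    + apply (Wadd (S m) (fun t => f t * (2 * sin ((t - p) / 2)) + (- a * sp - b * cp) * cos (fr (S m) j * t) + (a * cp - b * sp) * sin (fr (S m) j * t)) (S j) (- a * sp + b * cp) (- a * cp - b * sp)); try lia.
      apply (Wadd (S m) (fun t => f t * (2 * sin ((t - p) / 2))) j (- a * sp - b * cp) (a * cp - b * sp)); try lia. apply IHHf.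
    + intro t. simpl.
      assert (E1 : a * (2 * cos (fr m j * t) * sin ((t - p) / 2)) =
        a * (sin (fr (S m) j * t - p / 2) - sin (fr (S m) (S j) * t + p / 2))).
      { rewrite prod_to_sum_cs, fr_S0, fr_S1. auto. }
      assert (E2 : b * (2 * sin (fr m j * t) * sin ((t - p) / 2)) =
        b * (cos (fr (S m) (S j) * t + p / 2) - cos (fr (S m) j * t - p / 2))).
      { rewrite prod_to_sum_ss, fr_S0, fr_S1. auto. }
      rewrite sin_minus, sin_plus, cos_plus, cos_minus in *. fold cp sp in E1, E2.
      transitivity (f t * (2 * sin ((t - p) / 2)) + a * (2 * cos (fr m j * t) * sin ((t - p) / 2))
        + b * (2 * sin (fr m j * t) * sin ((t - p) / 2))); [rewrite E1, E2; ring | ring].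
  - eapply Wext; [apply IHHf|]. intro t; simpl; rewrite H; auto.
Qed.

Lemma gm_harm : forall m phi, (1 <= m)%nat -> exists A B Rf, InW m Rf /\ A * A + B * B = 4 /\
  forall t, gm m phi t = A * cos (fr m 0 * t) + B * sin (fr m 0 * t) + Rf t.
Proof. intros m phi Hm. induction Hm.
  - set (cp := cos (phi O / 2)). set (sp := sin (phi O / 2)).
    exists (- 2 * sp), (2 * cp), (fun _ => 0). split; [apply W0|]. split.
    + pose proof (sin2_cos2 (phi O / 2)). unfold Rsqr in H. fold cp sp in H. nra.
    + intro t. simpl. unfold fr. simpl. replace ((t - phi 0%nat) / 2) with ((1 / 2 - 0) * t - phi O / 2) by field.
      rewrite sin_minus. fold cp sp. ring.
  - destruct IHHm as [A [B [Rf [HR [HAB Hg]]]]].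
    set (p := phi m). set (cp := cos (p / 2)). set (sp := sin (p / 2)).
    exists (- A * sp - B * cp), (A * cp - B * sp),
      (fun t => Rf t * (2 * sin ((t - p) / 2)) + (0 + (- A * sp + B * cp) * cos (fr (S m) 1 * t) + (- A * cp - B * sp) * sin (fr (S m) 1 * t))).
    split; [|split].
    + apply InW_plus. apply InW_mul; auto.
      apply (Wadd (S m) (fun _ => 0) 1 _ _); try lia. apply W0.
    + pose proof (sin2_cos2 (p / 2)). unfold Rsqr in H. fold cp sp in H. nra.
    + intro t. simpl gm. rewrite Hg. fold p.
      assert (E1 : A * (2 * cos (fr m 0 * t) * sin ((t - p) / 2)) =
        A * (sin (fr (S m) 0 * t - p / 2) - sin (fr (S m) 1 * t + p / 2))).
      { rewrite prod_to_sum_cs, fr_S0, fr_S1. auto. }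
      assert (E2 : B * (2 * sin (fr m 0 * t) * sin ((t - p) / 2)) =
        B * (cos (fr (S m) 1 * t + p / 2) - cos (fr (S m) 0 * t - p / 2))).
      { rewrite prod_to_sum_ss, fr_S0, fr_S1. auto. }
      rewrite sin_minus, sin_plus, cos_plus, cos_minus in *. fold cp sp in E1, E2.
      transitivity (Rf t * (2 * sin ((t - p) / 2)) + A * (2 * cos (fr m 0 * t) * sin ((t - p) / 2))
        + B * (2 * sin (fr m 0 * t) * sin ((t - p) / 2))); [ring | rewrite E1, E2; ring].
Qed.

Definition tk (m : nat) (t : R) (k : nat) : R := t + 2 * PI * INR k / INR m.

Lemma cos_kpi : forall Z k, cos (Z + INR k * PI) = (-1) ^ k * cos Z.
Proof. intros Z k; induction k. simpl; rewrite Rmult_0_l, Rplus_0_r; ring.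
  rewrite S_INR. replace (Z + (INR k + 1) * PI) with ((Z + INR k * PI) + PI) by ring.
  rewrite neg_cos, IHk. simpl; ring. Qed.
Lemma sin_kpi : forall Z k, sin (Z + INR k * PI) = (-1) ^ k * sin Z.
Proof. intros Z k; induction k. simpl; rewrite Rmult_0_l, Rplus_0_r; ring.
  rewrite S_INR. replace (Z + (INR k + 1) * PI) with ((Z + INR k * PI) + PI) by ring.
  rewrite neg_sin, IHk. simpl; ring. Qed.

Lemma pow_m1_sq : forall k, (-1) ^ k * (-1) ^ k = 1.
Proof. intro k; rewrite <- pow_add. replace (k + k)%nat with (2 * k)%nat by lia.
  rewrite pow_mult. replace ((-1) ^ 2) with 1 by ring. apply pow1. Qed.

Lemma fsum_telescope : forall m (T : nat -> R), fsum m (fun k => T k - T (S k)) = T O - T m.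
Proof. induction m; intros; simpl; [ring|]. rewrite IHm; ring. Qed.

Lemma cos_sum_zero : forall m th d j, sin (d / 2) <> 0 -> INR m * d = 2 * INR j * PI ->
  fsum m (fun k => cos (th - INR k * d)) = 0.
Proof. intros m th d j Hs Hmd.
  assert (2 * sin (d / 2) * fsum m (fun k => cos (th - INR k * d)) = 0).
  { rewrite <- fsum_scal.
    rewrite (fsum_ext m _ (fun k => sin (th - INR k * d + d / 2) - sin (th - INR (S k) * d + d / 2))).
    - rewrite fsum_telescope. simpl INR. replace (th - 0 * d + d / 2) with ((th - INR m * d + d / 2) + 2 * INR j * PI) by lra.
      rewrite sin_period. ring.
    - intros k _. rewrite S_INR. replace (th - (INR k + 1) * d + d / 2) with ((th - INR k * d) - d / 2) by field.
      set (X := th - INR k * d). rewrite sin_plus, sin_minus. ring. }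
  apply Rmult_integral in H. destruct H; auto. lra.
Qed.

Lemma sin_sum_zero : forall m th d j, sin (d / 2) <> 0 -> INR m * d = 2 * INR j * PI ->
  fsum m (fun k => sin (th - INR k * d)) = 0.
Proof. intros m th d j Hs Hmd.
  assert (2 * sin (d / 2) * fsum m (fun k => sin (th - INR k * d)) = 0).
  { rewrite <- fsum_scal.
    rewrite (fsum_ext m _ (fun k => cos (th - INR (S k) * d + d / 2) - cos (th - INR k * d + d / 2))).
    - rewrite (fsum_ext m _ (fun k => - (cos (th - INR k * d + d / 2) - cos (th - INR (S k) * d + d / 2)))).
      2: intros; ring.
      rewrite (fsum_scal m (-1) (fun k => (cos (th - INR k * d + d / 2) - cos (th - INR (S k) * d + d / 2)))) || idtac.
      replace (fsum m (fun k => - (cos (th - INR k * d + d / 2) - cos (th - INR (S k) * d + d / 2)))) with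
        (-1 * fsum m (fun k => (cos (th - INR k * d + d / 2) - cos (th - INR (S k) * d + d / 2)))).
      2: { rewrite <- fsum_scal. apply fsum_ext; intros; ring. }
      rewrite fsum_telescope. simpl INR. replace (th - 0 * d + d / 2) with ((th - INR m * d + d / 2) + 2 * INR j * PI) by lra.
      rewrite cos_period. ring.
    - intros k _. rewrite S_INR. replace (th - (INR k + 1) * d + d / 2) with ((th - INR k * d) - d / 2) by field.
      set (X := th - INR k * d). rewrite cos_plus, cos_minus. ring. }
  apply Rmult_integral in H. destruct H; auto. lra.
Qed.

Lemma samp_arg : forall m j t k, (1 <= m)%nat ->
  fr m j * tk m t k = (fr m j * t - INR k * (2 * PI * INR j / INR m)) + INR k * PI.
Proof. intros. unfold fr, tk. assert (0 < INR m) by (apply lt_0_INR; lia). field. lra. Qed.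

Lemma sin_dhalf : forall m j, (1 <= j)%nat -> (j + 1 <= m)%nat -> sin ((2 * PI * INR j / INR m) / 2) <> 0.
Proof. intros. assert (0 < INR m) by (apply lt_0_INR; lia). assert (1 <= INR j) by (apply (le_INR 1); lia).
  assert (INR j < INR m) by (apply lt_INR; lia). pose proof PI_RGT_0.
  apply Rgt_not_eq. apply sin_gt_0.
  - replace (2 * PI * INR j / INR m / 2) with (PI * INR j / INR m) by (field; lra).
    apply Rdiv_lt_0_compat; nra.
  - replace (2 * PI * INR j / INR m / 2) with (PI * (INR j / INR m)) by (field; lra).
    assert (INR j / INR m < 1) by (apply (Rmult_lt_reg_r (INR m)); auto; unfold Rdiv; rewrite Rmult_assoc, Rinv_l; lra).
    nra.
Qed.

Lemma samp_W : forall m f t, (1 <= m)%nat -> InW m f -> fsum m (fun k => (-1) ^ k * f (tk m t k)) = 0.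
Proof. intros m f t Hm Hf. induction Hf.
  - rewrite (fsum_ext m _ (fun _ => 0 * 0)). rewrite fsum_const; ring. intros; ring.
  - rewrite (fsum_ext m _ (fun k => (-1) ^ k * f (tk m t k) +
       (a * cos (fr m j * t - INR k * (2 * PI * INR j / INR m)) + b * sin (fr m j * t - INR k * (2 * PI * INR j / INR m))))).
    + rewrite fsum_plus, IHHf, fsum_plus, fsum_scal, fsum_scal.
      rewrite (cos_sum_zero m _ _ j), (sin_sum_zero m _ _ j); try apply sin_dhalf; auto; try ring.
      all: assert (0 < INR m) by (apply lt_0_INR; lia); field; lra.
    + intros k _. rewrite samp_arg by auto. rewrite cos_kpi, sin_kpi.
      assert (HH : forall u x y z, u * u = 1 -> u * (x + a * (u * y) + b * (u * z)) = u * x + (a * y + b * z)).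
      { intros u x y z Hu. transitivity (u * x + (u * u) * (a * y + b * z)); [ring | rewrite Hu; ring]. }
      apply HH, pow_m1_sq.
  - rewrite (fsum_ext m _ (fun k => (-1) ^ k * f (tk m t k))); auto. intros; rewrite H; auto.
Qed.

Lemma samp_top : forall m A B t, (1 <= m)%nat ->
  fsum m (fun k => (-1) ^ k * (A * cos (fr m 0 * tk m t k) + B * sin (fr m 0 * tk m t k)))
  = INR m * (A * cos (fr m 0 * t) + B * sin (fr m 0 * t)).
Proof. intros. rewrite <- fsum_const. apply fsum_ext. intros k _.
  rewrite samp_arg by auto. simpl INR. rewrite Rmult_0_r, !Rmult_0_l, Rdiv_0_l || idtac.
  replace (fr m 0 * t - INR k * (2 * PI * 0 / INR m)) with (fr m 0 * t) by (unfold Rdiv; ring).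
  rewrite cos_kpi, sin_kpi.
  transitivity (((-1) ^ k * (-1) ^ k) * (A * cos (fr m 0 * t) + B * sin (fr m 0 * t))); [ring | rewrite pow_m1_sq; ring].
Qed.

Lemma gm_samp : forall m phi, (1 <= m)%nat -> exists A B, A * A + B * B = 4 /\ forall t,
  fsum m (fun k => (-1) ^ k * gm m phi (tk m t k)) = INR m * (A * cos (fr m 0 * t) + B * sin (fr m 0 * t)).
Proof. intros m phi Hm. destruct (gm_harm m phi Hm) as [A [B [Rf [HR [HAB Hg]]]]].
  exists A, B; split; auto. intro t.
  rewrite (fsum_ext m _ (fun k => (-1) ^ k * (A * cos (fr m 0 * tk m t k) + B * sin (fr m 0 * tk m t k)) + (-1) ^ k * Rf (tk m t k))).
  rewrite fsum_plus, samp_top, samp_W by auto. ring.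
  intros; rewrite Hg; ring.
Qed.

Lemma angle_exists : forall x y, x * x + y * y = 1 -> exists th, cos th = x /\ sin th = y.
Proof. intros x y H. assert (Hx : -1 <= x <= 1) by nra.
  assert (E : sqrt (1 - x²) = Rabs y).
  { replace (1 - x²) with (y * y) by (unfold Rsqr; lra). apply sqrt_Rsqr_abs. }
  destruct (Rle_or_lt 0 y).
  - exists (acos x). rewrite cos_acos, sin_acos, E, Rabs_right; auto; lra.
  - exists (- acos x). rewrite cos_neg, sin_neg, cos_acos, sin_acos, E, Rabs_left; auto; lra.
Qed.

Lemma fsum_abs_lt : forall m (x : nat -> R) c, (1 <= m)%nat -> (forall k, (k < m)%nat -> Rabs (x k) < c) ->
  fsum m (fun k => (-1) ^ k * x k) < INR m * c.
Proof. intros m x c Hm H. induction Hm.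
  - simpl. specialize (H O ltac:(lia)). apply Rabs_def2 in H. lra.
  - simpl fsum. rewrite S_INR. assert (fsum m (fun k => (-1) ^ k * x k) < INR m * c) by (apply IHHm; intros; apply H; lia).
    specialize (H m ltac:(lia)). assert (Rabs ((-1) ^ m * x m) < c).
    { rewrite Rabs_mult, pow_1_abs. lra. } apply Rabs_def2 in H1. lra.
Qed.

Lemma gm_max : forall m phi, (1 <= m)%nat -> exists s, 0 <= s <= 2 * PI /\ 2 <= Rabs (gm m phi s).
Proof. intros m phi Hm. destruct (gm_samp m phi Hm) as [A [B [HAB Hs]]].
  destruct (angle_exists (A / 2) (B / 2)) as [th [Hc Hsn]]. { nra. }
  assert (0 < INR m) by (apply lt_0_INR; lia).
  set (t := th / fr m 0).
  assert (fr m 0 * t = th) by (unfold t, fr; simpl; field; lra).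
  specialize (Hs t). rewrite H0, Hc, Hsn in Hs.
  destruct (classic (exists k, (k < m)%nat /\ 2 <= Rabs (gm m phi (tk m t k)))) as [[k [_ Hk]]|Hn].
  - destruct (reduce_t m phi (tk m t k)) as [s [Hs1 Hs2]]. exists s; split; auto. lra.
  - exfalso. assert (fsum m (fun k => (-1) ^ k * gm m phi (tk m t k)) < INR m * 2).
    { apply fsum_abs_lt; auto. intros k Hk. apply Rnot_le_lt. intro; apply Hn; eauto. }
    rewrite Hs in H1. nra.
Qed.

(* the polynomial z^m - 1 analogue *)
Fixpoint fprod (n : nat) (f : nat -> R) : R := match n with O => 1 | S k => fprod k f * f k end.

Lemma gm_fprod : forall m phi t, gm m phi t = fprod m (fun j => 2 * sin ((t - phi j) / 2)).
Proof. induction m; intros; simpl; auto. rewrite IHm; auto. Qed.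

Lemma fprod_ext : forall n f g, (forall j, (j < n)%nat -> f j = g j) -> fprod n f = fprod n g.
Proof. induction n; intros; simpl; auto. rewrite (IHn f g), H by (auto; lia). auto. Qed.

Lemma fprod_shift : forall n f, fprod n (fun j => f (S j)) * f O = fprod n f * f n.
Proof. induction n; intros; simpl; [ring|]. rewrite <- (IHn f). ring. Qed.

Lemma fprod_zero : forall n f j, (j < n)%nat -> f j = 0 -> fprod n f = 0.
Proof. induction n; intros f j Hj H; [lia|]. simpl. destruct (Nat.eq_dec j n).
  subst; rewrite H; ring. rewrite (IHn f j) by (auto; lia). ring. Qed.

Definition phi0 (m : nat) (j : nat) : R := - (2 * PI * INR j / INR m).

Lemma gm_phi0_anti : forall m t, (1 <= m)%nat -> gm m (phi0 m) (t + 2 * PI / INR m) = - gm m (phi0 m) t.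
Proof. intros m t Hm. assert (0 < INR m) by (apply lt_0_INR; lia).
  rewrite !gm_fprod. set (f := fun j => 2 * sin ((t - phi0 m j) / 2)).
  assert (E : forall j, 2 * sin ((t + 2 * PI / INR m - phi0 m j) / 2) = f (S j)).
  { intro j; unfold f, phi0. rewrite S_INR. f_equal. f_equal. field. lra. }
  transitivity (fprod m (fun j => f (S j))).
  { apply fprod_ext; intros; apply E. }
  assert (Hfm : f m = - f O).
  { unfold f, phi0. simpl INR. replace ((t - - (2 * PI * INR m / INR m)) / 2) with (((t - - (2 * PI * 0 / INR m)) / 2) + PI) by (field; lra).
    rewrite neg_sin. ring. }
  pose proof (fprod_shift m f) as Hsh. rewrite Hfm in Hsh.
  destruct (Req_dec (f O) 0) as [Hz|Hz].
  - rewrite (fprod_zero m f O) by (auto; lia).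
    rewrite (fprod_zero m (fun j => f (S j)) (pred m)); [ring | lia |]. replace (S (pred m)) with m by lia.
    rewrite Hfm, Hz; ring.
  - apply (Rmult_eq_reg_r (f O)); auto. rewrite Hsh. ring.
Qed.

Lemma gm_phi0_k : forall m t k, (1 <= m)%nat -> gm m (phi0 m) (tk m t k) = (-1) ^ k * gm m (phi0 m) t.
Proof. intros m t k Hm. assert (0 < INR m) by (apply lt_0_INR; lia). induction k.
  - unfold tk. simpl. replace (t + 2 * PI * 0 / INR m) with t by (field; lra). ring.
  - replace (tk m t (S k)) with (tk m t k + 2 * PI / INR m) by (unfold tk; rewrite S_INR; field; lra).
    rewrite gm_phi0_anti, IHk by auto. simpl; ring.
Qed.

Lemma gm_phi0_bound : forall m t, (1 <= m)%nat -> Rabs (gm m (phi0 m) t) <= 2.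
Proof. intros m t Hm. destruct (gm_samp m (phi0 m) Hm) as [A [B [HAB Hs]]].
  specialize (Hs t). assert (0 < INR m) by (apply lt_0_INR; lia).
  rewrite (fsum_ext m _ (fun _ => gm m (phi0 m) t)) in Hs.
  2: { intros k _. rewrite gm_phi0_k by auto. rewrite <- Rmult_assoc, pow_m1_sq. ring. }
  rewrite fsum_const in Hs. apply Rmult_eq_reg_l in Hs; [|lra].
  rewrite Hs. pose proof (sin2_cos2 (fr m 0 * t)). unfold Rsqr in H0.
  set (c := cos (fr m 0 * t)) in *. set (s := sin (fr m 0 * t)) in *.
  assert (E : (A * c + B * s) * (A * c + B * s) = (A * A + B * B) * (s * s + c * c) - (A * s - B * c) * (A * s - B * c)) by ring.
  rewrite HAB, H0 in E. pose proof (Rle_0_sqr (A * s - B * c)). unfold Rsqr in H1.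
  apply Rabs_le. split; nra.
Qed.

Fixpoint IsPoly (n : nat) (f : R -> R) : Prop :=
  match n with
  | O => exists c, forall u, f u = c
  | S k => exists c g, IsPoly k g /\ forall u, f u = c + u * g u
  end.

Lemma IsPoly_ext : forall n f g, IsPoly n f -> (forall u, f u = g u) -> IsPoly n g.
Proof. destruct n; simpl; intros f g [c H] E.
  - exists c; intros; rewrite <- E; auto.
  - destruct H as [g' [H1 H2]]. exists c, g'; split; auto. intros; rewrite <- E; auto. Qed.

Lemma IsPoly_const : forall n c, IsPoly n (fun _ => c).
Proof. induction n; intros; simpl. exists c; auto. exists c, (fun _ => 0); split; auto. intros; cbv beta; ring. Qed.

Lemma IsPoly_lift : forall n f, IsPoly n f -> IsPoly (S n) f.
Proof. induction n; intros f H.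
  - destruct H as [c Hc]. exists c, (fun _ => 0). split. exists 0; auto. intros; rewrite Hc; ring.
  - destruct H as [c [g [Hg E]]]. exists c, g. split; auto. Qed.

Lemma IsPoly_le : forall n k f, (n <= k)%nat -> IsPoly n f -> IsPoly k f.
Proof. intros n k f H; induction H; intros; auto. apply IsPoly_lift; auto. Qed.

Lemma IsPoly_plus : forall n f g, IsPoly n f -> IsPoly n g -> IsPoly n (fun u => f u + g u).
Proof. induction n; intros f g Hf Hg.
  - destruct Hf as [a Ha], Hg as [b Hb]. exists (a + b); intros; rewrite Ha, Hb; auto.
  - destruct Hf as [a [f' [Hf' Ef]]], Hg as [b [g' [Hg' Eg]]].
    exists (a + b), (fun u => f' u + g' u). split; auto. intros; rewrite Ef, Eg; ring. Qed.

Lemma IsPoly_scal : forall n c f, IsPoly n f -> IsPoly n (fun u => c * f u).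
Proof. induction n; intros c f Hf.
  - destruct Hf as [a Ha]. exists (c * a); intros; rewrite Ha; auto.
  - destruct Hf as [a [f' [Hf' Ef]]]. exists (c * a), (fun u => c * f' u). split; auto.
    intros; rewrite Ef; ring. Qed.

Lemma IsPoly_X : forall n f, IsPoly n f -> IsPoly (S n) (fun u => u * f u).
Proof. intros. exists 0, f. split; auto. intros; cbv beta; ring. Qed.

Lemma IsPoly_mul : forall a b f g, IsPoly a f -> IsPoly b g -> IsPoly (a + b) (fun u => f u * g u).
Proof. induction a; intros b f g Hf Hg.
  - destruct Hf as [c Hc]. simpl. eapply IsPoly_ext; [apply (IsPoly_scal b c g Hg)|]. intros; rewrite Hc; auto.
  - destruct Hf as [c [f' [Hf' Ef]]].
    apply (IsPoly_ext _ (fun u => c * g u + u * (f' u * g u))).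
    + apply IsPoly_plus. apply (IsPoly_le b). lia. apply (IsPoly_scal b c g Hg).
      change (S a + b)%nat with (S (a + b)). apply IsPoly_X. apply IHa; auto.
    + intros; rewrite Ef; ring.
Qed.

Lemma IsPoly_factor : forall n f r, IsPoly (S n) f -> f r = 0 ->
  exists k, IsPoly n k /\ forall u, f u = (u - r) * k u.
Proof. induction n; intros f r Hf Hr.
  - destruct Hf as [c [g [[d Hd] E]]]. exists (fun _ => d). split. exists d; auto.
    intros. rewrite E, Hd. rewrite E, Hd in Hr. nra.
  - destruct Hf as [c [g [Hg E]]].
    destruct (IHn (fun u => g u - g r) r) as [k' [Hk' Ek']].
    + eapply IsPoly_ext; [apply IsPoly_plus; [apply Hg | apply (IsPoly_const (S n) (- g r))]|]. intros; cbv beta; ring.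
    + ring.
    + exists (fun u => g u + r * k' u). split.
      * apply IsPoly_plus; auto. apply IsPoly_lift, IsPoly_scal; auto.
      * intros u. rewrite E. rewrite E in Hr. specialize (Ek' u). simpl in Ek'.
        assert (c = - (r * g r)) by lra. subst c. nra.
Qed.

Lemma IsPoly_roots : forall n f, IsPoly n f -> (exists u0, f u0 <> 0) -> exists L, forall u, f u = 0 -> In u L.
Proof. induction n; intros f Hf [u0 Hu0].
  - destruct Hf as [c Hc]. exists nil. intros u Hu. rewrite Hc in Hu, Hu0. contradiction.
  - destruct (classic (exists r, f r = 0)) as [[r Hr]|Hn].
    + destruct (IsPoly_factor n f r Hf Hr) as [k [Hk E]].
      destruct (IHn k Hk) as [L HL].
      { exists u0. intro Hk0. apply Hu0. rewrite E, Hk0. ring. }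
      exists (r :: L). intros u Hu. rewrite E in Hu. apply Rmult_integral in Hu. destruct Hu.
      left; lra. right; auto.
    + exists nil. intros u Hu; exfalso; eauto.
Qed.

Definition qpol (phi : nat -> R) (j : nat) (u : R) : R :=
  (2 - 2 * cos (phi j - phi O)) + u * ((- 4 * sin (phi j - phi O)) + u * (2 + 2 * cos (phi j - phi O))).

Lemma qpol_poly : forall phi j, IsPoly 2 (qpol phi j).
Proof. intros. exists (2 - 2 * cos (phi j - phi O)), (fun u => (- 4 * sin (phi j - phi O)) + u * (2 + 2 * cos (phi j - phi O))).
  split; auto. exists (- 4 * sin (phi j - phi O)), (fun _ => 2 + 2 * cos (phi j - phi O)). split; auto.
  exists (2 + 2 * cos (phi j - phi O)); auto. Qed.

Lemma qpol_ident : forall phi j t, cos ((t - phi O) / 2) <> 0 ->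
  (2 * sin ((t - phi j) / 2)) * (2 * sin ((t - phi j) / 2)) =
  cos ((t - phi O) / 2) * cos ((t - phi O) / 2) * qpol phi j (tan ((t - phi O) / 2)).
Proof. intros phi j t Hc. set (w := (t - phi O) / 2). set (al := phi j - phi O).
  replace ((t - phi j) / 2) with (w - al / 2) by (unfold w, al; field).
  assert (E1 : 2 * sin (w - al / 2) * (2 * sin (w - al / 2)) = 2 - 2 * cos (2 * (w - al / 2))).
  { rewrite cos_2a_sin. ring. }
  rewrite E1. replace (2 * (w - al / 2)) with (2 * w - al) by field.
  rewrite cos_minus, cos_2a, sin_2a. unfold qpol, tan. fold w al.
  pose proof (sin2_cos2 w). unfold Rsqr in H. field_simplify; auto. nra.
Qed.

Lemma one_plus_tan2 : forall w, cos w <> 0 -> cos w * cos w * (1 + tan w * tan w) = 1.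
Proof. intros. unfold tan. pose proof (sin2_cos2 w). unfold Rsqr in H0. field_simplify; auto. lra. Qed.

Definition Qpol (m : nat) (phi : nat -> R) (u : R) : R := fprod m (fun j => qpol phi j u).

Lemma Qpol_poly : forall m phi, IsPoly (2 * m) (Qpol m phi).
Proof. induction m; intros. exists 1; intros; auto.
  unfold Qpol; simpl fprod. replace (2 * S m)%nat with (2 * m + 2)%nat by lia.
  apply (IsPoly_mul (2 * m) 2 (Qpol m phi) (qpol phi m)); auto. apply qpol_poly. Qed.

Lemma gm_sq : forall m phi t, cos ((t - phi O) / 2) <> 0 ->
  gm m phi t * gm m phi t = (cos ((t - phi O) / 2) * cos ((t - phi O) / 2)) ^ m * Qpol m phi (tan ((t - phi O) / 2)).
Proof. induction m; intros phi t Hc. simpl; unfold Qpol; simpl; ring.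
  simpl gm. unfold Qpol; simpl fprod. fold (Qpol m phi).
  transitivity ((gm m phi t * gm m phi t) * ((2 * sin ((t - phi m) / 2)) * (2 * sin ((t - phi m) / 2)))); [ring|].
  rewrite IHm, qpol_ident by auto. rewrite <- tech_pow_Rmult. unfold Qpol. ring.
Qed.

Lemma pow_poly : forall m, IsPoly (2 * m) (fun u => (1 + u * u) ^ m).
Proof. induction m. exists 1; auto. replace (2 * S m)%nat with (2 * m + 2)%nat by lia.
  apply (IsPoly_ext _ (fun u => (1 + u * u) ^ m * (1 + u * u))).
  apply (IsPoly_mul (2 * m) 2 (fun u => (1 + u * u) ^ m) (fun u => 1 + u * u)); [apply IHm|].
  exists 1, (fun u => u). split; [|intros; cbv beta; ring]. exists 0, (fun _ => 1). split; [exists 1; auto| intros; cbv beta; ring].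
  intros; simpl; ring.
Qed.

Lemma window : forall y (k : Z), y <= IZR k <= y + 1 -> k = (up y - 1)%Z \/ k = up y.
Proof. intros y k Hk. destruct (archimed y) as [H1 H2].
  assert (IZR (up y - 1) <= IZR k) by (rewrite minus_IZR; lra).
  assert (IZR k < IZR (up y + 1)) by (rewrite plus_IZR; lra).
  apply le_IZR in H. apply lt_IZR in H0. lia.
Qed.

Definition cands (x : R) : list R :=
  let y := - x / (2 * PI) in
  (x + IZR (up y - 1) * (2 * PI)) :: (x + IZR (up y) * (2 * PI)) :: nil.

Lemma cands_spec : forall x (k : Z) t, t = x + IZR k * (2 * PI) -> 0 <= t <= 2 * PI -> In t (cands x).
Proof. intros x k t Ht Hr. pose proof PI_RGT_0.
  assert (- x / (2 * PI) <= IZR k <= - x / (2 * PI) + 1).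
  { split; apply (Rmult_le_reg_r (2 * PI)); try lra; unfold Rdiv; rewrite ?Rmult_plus_distr_r, Rmult_assoc, Rinv_l; lra. }
  unfold cands. destruct (window _ _ H0) as [-> | ->]; simpl; auto.
Qed.

Lemma level_finite : forall m phi h, (1 <= m)%nat -> 0 < h ->
  exists L : list R, forall t, 0 <= t <= 2 * PI -> Rabs (gm m phi t) = h -> In t L.
Proof. intros m phi h Hm Hh.
  set (P := fun u => Qpol m phi u - h * h * (1 + u * u) ^ m).
  destruct (IsPoly_roots (2 * m) P) as [L HL].
  - apply (IsPoly_ext _ (fun u => Qpol m phi u + (- (h * h)) * (1 + u * u) ^ m)).
    apply IsPoly_plus; [apply Qpol_poly | apply (IsPoly_scal _ _ (fun u => (1 + u * u) ^ m)), pow_poly].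
    intros; unfold P; ring.
  - exists 0. unfold P. assert (Qpol m phi 0 = 0).
    { unfold Qpol. apply (fprod_zero m _ O). lia. unfold qpol. rewrite Rminus_diag, cos_0. ring. }
    rewrite H. replace (1 + 0 * 0) with 1 by ring. rewrite pow1. nra.
  - exists (flat_map cands ((phi O + PI) :: map (fun u => phi O + 2 * atan u) L)).
    intros t Ht Hlev. apply in_flat_map.
    set (w := (t - phi O) / 2).
    destruct (Req_dec (cos w) 0) as [Hc|Hc].
    + destruct (cos_eq_0_0 _ Hc) as [k Hk]. exists (phi O + PI). split; [left; auto|].
      apply (cands_spec _ k); auto. unfold w in Hk. lra.
    + assert (HP : P (tan w) = 0).
      { unfold P. pose proof (gm_sq m phi t Hc). fold w in H.
        assert (gm m phi t * gm m phi t = h * h).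
        { rewrite <- Hlev. rewrite <- Rabs_mult. rewrite Rabs_right; auto. apply Rle_ge, Rle_0_sqr || nra. }
        pose proof (one_plus_tan2 w Hc).
        assert (Hpow : ((cos w * cos w) ^ m) * ((1 + tan w * tan w) ^ m) = 1).
        { rewrite <- Rpow_mult_distr, H1. apply pow1. }
        assert (0 < (cos w * cos w) ^ m). { apply pow_lt. assert (0 < cos w * cos w). { destruct (Rlt_or_le 0 (cos w)); [nra|]. assert (cos w < 0) by lra. nra. } lra. }
        apply (Rmult_eq_reg_l ((cos w * cos w) ^ m)); [|lra]. rewrite Rmult_0_r.
        replace ((cos w * cos w) ^ m * (Qpol m phi (tan w) - h * h * (1 + tan w * tan w) ^ m)) with
          ((cos w * cos w) ^ m * Qpol m phi (tan w) - h * h * (((cos w * cos w) ^ m) * ((1 + tan w * tan w) ^ m))) by ring.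
        rewrite Hpow, <- H, H0. ring. }
      apply HL in HP. exists (phi O + 2 * atan (tan w)). split.
      { right. apply (in_map (fun u => phi O + 2 * atan u)); auto. }
      set (a := atan (tan w)).
      assert (Hta : tan a = tan w) by (unfold a; apply tan_atan).
      assert (Hca : 0 < cos a) by (apply cos_gt_0; pose proof (atan_bound (tan w)); unfold a; lra).
      assert (sin (w - a) = 0).
      { rewrite sin_minus.
        assert (E : sin w * cos a - cos w * sin a = cos a * cos w * (tan w - tan a)).
        { unfold tan. field. split; [lra | auto]. }
        rewrite E, Hta. ring. }
      destruct (sin_eq_0_0 _ H) as [k Hk]. apply (cands_spec _ k); auto. unfold w in Hk. lra.
Qed.

Definition subseq (s : nat -> nat) := forall n, (s n < s (S n))%nat.

Lemma subseq_ge : forall s, subseq s -> forall n, (n <= s n)%nat.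
Proof. intros s Hs n; induction n; [lia|]. specialize (Hs n); lia. Qed.

Lemma subseq_mono : forall s, subseq s -> forall n p, (n <= p)%nat -> (s n <= s p)%nat.
Proof. intros s Hs n p H; induction H; auto. specialize (Hs m); lia. Qed.

Lemma subseq_comp : forall s t, subseq s -> subseq t -> subseq (fun n => s (t n)).
Proof. intros s t Hs Ht n. pose proof (subseq_mono s Hs (S (t n)) (t (S n)) (Ht n)). specialize (Hs (t n)). lia. Qed.

Lemma cv_subseq : forall u l s, Un_cv u l -> subseq s -> Un_cv (fun n => u (s n)) l.
Proof. intros u l s H Hs eps Heps. destruct (H eps Heps) as [N HN]. exists N. intros n Hn.
  apply HN. pose proof (subseq_ge s Hs n). lia. Qed.

Lemma valadh_close : forall un l, ValAdh un l -> forall N eps, 0 < eps -> exists p, (N <= p)%nat /\ Rabs (un p - l) < eps.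
Proof. intros un l H N eps Heps.
  destruct (H (fun y => Rabs (y - l) < eps) N) as [p Hp]; [|eauto].
  exists (mkposreal eps Heps). intros y Hy. unfold Rtopology.disc in Hy. simpl in Hy. auto.
Qed.

Lemma bw1 : forall (un : nat -> R) a b, (forall n, a <= un n <= b) ->
  exists s l, subseq s /\ Un_cv (fun n => un (s n)) l.
Proof. intros un a b Hb.
  destruct (Bolzano_Weierstrass un (fun c => a <= c <= b) (compact_P3 a b) Hb) as [l Hl].
  assert (Hc : forall N k, exists p, (N <= p)%nat /\ Rabs (un p - l) < / INR (S k)).
  { intros. apply valadh_close; auto. apply Rinv_0_lt_compat, lt_0_INR; lia. }
  set (ch := fun N k => proj1_sig (constructive_indefinite_description _ (Hc N k))).
  assert (Hch : forall N k, (N <= ch N k)%nat /\ Rabs (un (ch N k) - l) < / INR (S k)).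
  { intros; unfold ch; destruct constructive_indefinite_description; auto. }
  set (s := fix s (k : nat) : nat := match k with O => ch O O | S k' => ch (S (s k')) k end).
  exists s, l. split.
  - intro n. simpl. destruct (Hch (S (s n)) (S n)); lia.
  - intros eps Heps. destruct (archimed_cor1 eps Heps) as [K [HK HK0]]. exists K. intros n Hn.
    unfold R_dist. assert (Rabs (un (s n) - l) < / INR (S n)).
    { destruct n; simpl; [apply (Hch O O) | apply (Hch (S (s n)) (S n))]. }
    assert (/ INR (S n) <= / INR K). { apply Rinv_le_contravar. apply lt_0_INR; lia. apply le_INR; lia. }
    lra.
Qed.

Lemma bwm : forall m (x : nat -> nat -> R) a b, (forall n j, (j < m)%nat -> a <= x n j <= b) ->
  exists s y, subseq s /\ forall j, (j < m)%nat -> Un_cv (fun n => x (s n) j) (y j).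
Proof. induction m; intros x a b Hb.
  - exists (fun n => n), (fun _ => 0). split. intro; lia. intros; lia.
  - destruct (IHm x a b) as [s [y [Hs Hy]]]. intros; apply Hb; lia.
    destruct (bw1 (fun n => x (s n) m) a b) as [t [l [Ht Hl]]]. intros; apply Hb; lia.
    exists (fun n => s (t n)), (fun j => if Nat.eqb j m then l else y j). split.
    + apply subseq_comp; auto.
    + intros j Hj. destruct (Nat.eqb_spec j m).
      * subst; auto.
      * apply (cv_subseq (fun n => x (s n) j)); auto. apply Hy; lia.
Qed.

Lemma fsum_cv : forall m (x : nat -> nat -> R) y, (forall j, (j < m)%nat -> Un_cv (fun n => x n j) (y j)) ->
  forall eps, 0 < eps -> exists N, forall n, (N <= n)%nat -> fsum m (fun j => Rabs (x n j - y j)) < eps.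
Proof. induction m; intros x y H eps Heps.
  - exists O; intros; simpl; lra.
  - destruct (IHm x y) with (eps := eps / 2) as [N1 HN1]. intros; apply H; lia. lra.
    destruct (H m ltac:(lia) (eps / 2)) as [N2 HN2]. lra.
    exists (Nat.max N1 N2). intros n Hn. simpl. specialize (HN1 n ltac:(lia)). specialize (HN2 n ltac:(lia)).
    unfold R_dist in HN2. lra.
Qed.

Lemma inf_exists : forall E : R -> Prop, (exists x, E x) -> (forall x, E x -> 0 <= x) -> exists d, is_inf E d.
Proof. intros E [x0 Hx0] Hlb.
  destruct (completeness (fun y => E (- y))) as [m [Hm1 Hm2]].
  - exists 0. intros y Hy. apply Hlb in Hy. lra.
  - exists (- x0). rewrite Ropp_involutive; auto.
  - exists (- m). split.
    + intros y Hy. assert (- y <= m) by (apply Hm1; rewrite Ropp_involutive; auto). lra.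
    + intros z Hz. assert (m <= - z). { apply Hm2. intros y Hy. apply Hz in Hy. lra. } lra.
Qed.

Lemma grid_index : forall M x, (1 <= M)%nat -> 0 <= x <= INR M -> exists k, (k < M)%nat /\ INR k <= x <= INR k + 1.
Proof. induction M; intros x HM Hx; [lia|].
  destruct (Nat.eq_dec M 0) as [->|HM0].
  - exists O. simpl in Hx. split; [lia|]. simpl. lra.
  - destruct (Rle_or_lt x (INR M)).
    + destruct (IHM x) as [k [Hk Hk']]; [lia | lra |]. exists k; split; auto; lia.
    + exists M. rewrite S_INR in Hx. split; [lia | lra].
Qed.

Definition dec (P : Prop) (a b : R) : R := if excluded_middle_informative P then a else b.

Lemma fsum_add : forall M K f, fsum (M + K) f = fsum M f + fsum K (fun i => f (M + i)%nat).
Proof. intros M K f; induction K. rewrite Nat.add_0_r; simpl; ring.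
  rewrite Nat.add_succ_r. simpl. rewrite IHK. ring. Qed.

Lemma mes_K : forall (good : nat -> Prop) dl j, 0 < dl ->
  exists mu, mes_is (fun t => exists k, (k < j)%nat /\ good k /\ INR k * dl <= t <= (INR k + 1) * dl) mu /\
    fsum j (fun k => dec (good k) dl 0) <= mu.
Proof. intros good dl j Hdl. induction j.
  - destruct (mes_bounded (fun t => exists k, (k < 0)%nat /\ good k /\ INR k * dl <= t <= (INR k + 1) * dl) 0 0)
      as [mu Hmu]; [lra | intros t [k [Hk _]]; lia |].
    exists mu; split; auto. simpl. eapply mes_ge0; eauto. exists (0 - 0). apply cover_bounded; [lra|]. intros t [k [Hk _]]; lia.
  - destruct IHj as [mu [Hmu Hs]].
    assert (Hb : forall t, (exists k, (k < S j)%nat /\ good k /\ INR k * dl <= t <= (INR k + 1) * dl) ->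
      0 <= t <= (INR j + 1) * dl).
    { intros t [k [Hk [_ Ht]]]. pose proof (pos_INR k). assert (INR k + 1 <= INR j + 1) by (apply Rplus_le_compat_r, le_INR; lia). nra. }
    destruct (mes_bounded _ 0 ((INR j + 1) * dl) ltac:(pose proof (pos_INR j); nra) Hb) as [mu' Hmu'].
    exists mu'. split; auto. simpl fsum. unfold dec at 2. destruct (excluded_middle_informative (good j)) as [Hg|Hg].
    + assert (mu + dl <= mu').
      { replace dl with ((INR j + 1) * dl - INR j * dl) at 1 by ring.
        apply (mes_split (fun t => exists k, (k < j)%nat /\ good k /\ INR k * dl <= t <= (INR k + 1) * dl) (fun t => INR j * dl <= t <= (INR j + 1) * dl) (INR j * dl)); auto.
        - intros t [k [Hk [_ Ht]]]. assert (INR k + 1 <= INR j) by (rewrite <- S_INR; apply le_INR; lia). nra.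
        - intros t Ht; lra.
        - apply mes_interval. nra.
        - eapply mes_ext; [|apply Hmu']. intros t; split.
          + intros [k [Hk [Hgk Ht]]]. destruct (Nat.eq_dec k j). subst; right; auto. left; exists k; split; [lia | split; auto].
          + intros [[k [Hk [Hgk Ht]]]|Ht]. exists k; split; [lia | split; auto]. exists j; split; [lia | split; auto]. }
      lra.
    + assert (mu = mu').
      { eapply mes_unique; [apply Hmu|]. eapply mes_ext; [|apply Hmu']. intros t; split.
        + intros [k [Hk [Hgk Ht]]]. destruct (Nat.eq_dec k j). subst; contradiction. exists k; split; [lia | split; auto].
        + intros [k [Hk [Hgk Ht]]]. exists k; split; [lia | split; auto]. }
      lra.
Qed.

Lemma margin_exists : forall (g : R -> R) (good : nat -> Prop) h dl J, continuity g ->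
  (forall k, good k -> forall t, INR k * dl <= t <= (INR k + 1) * dl -> h < g t) -> 0 < dl ->
  exists mu, 0 < mu /\ forall k, (k < J)%nat -> good k -> forall t, INR k * dl <= t <= (INR k + 1) * dl -> h + mu <= g t.
Proof. intros g good h dl J Hc Hgood Hdl. induction J.
  - exists 1. split; [lra|]. intros; lia.
  - destruct IHJ as [mu1 [Hmu1 H1]].
    destruct (classic (good J)) as [Hg|Hg].
    + destruct (continuity_ab_min g (INR J * dl) ((INR J + 1) * dl)) as [mx [Hmx1 Hmx2]].
      { nra. } { intros; apply Hc. }
      pose proof (Hgood J Hg mx Hmx2).
      exists (Rmin mu1 (g mx - h)). split. apply Rmin_pos; lra.
      intros k Hk Hgk t Ht. destruct (Nat.eq_dec k J).
      * subst. specialize (Hmx1 t Ht). pose proof (Rmin_r mu1 (g mx - h)). lra.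
      * specialize (H1 k ltac:(lia) Hgk t Ht). pose proof (Rmin_l mu1 (g mx - h)). lra.
    + exists mu1. split; auto. intros k Hk Hgk t Ht. destruct (Nat.eq_dec k J). subst; contradiction.
      apply (H1 k); auto; lia.
Qed.

Lemma grid_bound : forall m h phis (psi : nat -> nat -> R) (x : nat -> R) d s Z M,
  (1 <= m)%nat -> 0 < h -> (1 <= M)%nat ->
  (forall n, mes_is (superlevel m (psi n) h) (x n)) ->
  (forall n, x n < d + / INR (S n)) ->
  (forall j, (j < m)%nat -> Un_cv (fun n => psi n j) (phis j)) ->
  (forall t, 0 <= t <= 2 * PI -> Rabs (gm m phis t) = h -> In t Z) ->
  mes_is (superlevel m phis h) s ->
  s <= d + 2 * (2 * PI / INR M) * INR (length Z).
Proof. intros m h phis psi x d s Z M Hm Hh HM Hx Hxd Hcv HZ Hs.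
  pose proof PI_RGT_0 as HPI. assert (HMp : 0 < INR M) by (apply lt_0_INR; lia).
  set (dl := 2 * PI / INR M).
  assert (Hdl : 0 < dl) by (unfold dl; apply Rdiv_lt_0_compat; lra).
  assert (HdlM : dl * INR M = 2 * PI) by (unfold dl; field; lra).
  set (g := fun t => Rabs (gm m phis t)).
  assert (Hgc : continuity g) by apply gm_abs_cont.
  set (good := fun k => forall t, INR k * dl <= t <= (INR k + 1) * dl -> h < g t).
  set (G := fsum M (fun k => dec (good k) dl 0)).
  assert (Hin : forall k t, (k < M)%nat -> INR k * dl <= t <= (INR k + 1) * dl -> 0 <= t <= 2 * PI).
  { intros k t Hk Ht. pose proof (pos_INR k). assert (INR k + 1 <= INR M) by (rewrite <- S_INR; apply le_INR; lia). nra. }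
  assert (Ha : s <= G + INR (length Z) * (2 * dl)).
  { set (a := fun n => if (n <? M)%nat then dec (good n) (INR n * dl) 0 else nth (n - M) Z 0 - dl).
    set (b := fun n => if (n <? M)%nat then dec (good n) ((INR n + 1) * dl) 0 else nth (n - M) Z 0 + dl).
    assert (Hc : cover_length (superlevel m phis h) (fsum (M + length Z) (fun n => b n - a n))).
    { apply cover_finite.
      - intros n _. unfold a, b, dec. destruct (Nat.ltb_spec n M); [|lra].
        destruct excluded_middle_informative; lra.
      - intros t [Ht Hlev]. destruct (grid_index M (t / dl)) as [k [Hk Hkt]]; auto.
        { split. unfold Rdiv; apply Rmult_le_pos; [lra | left; apply Rinv_0_lt_compat; lra]. apply (Rmult_le_reg_r dl); auto. unfold Rdiv. rewrite Rmult_assoc, Rinv_l; lra. }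
        assert (Hkt' : INR k * dl <= t <= (INR k + 1) * dl).
        { replace t with (t / dl * dl) by (field; lra). split; apply Rmult_le_compat_r; lra. }
        destruct (excluded_middle_informative (good k)) as [Hg|Hg].
        + exists k. split; [lia|]. unfold a, b, dec. destruct (Nat.ltb_spec k M); [|lia].
          destruct excluded_middle_informative; [auto | contradiction].
        + unfold good in Hg. apply not_all_ex_not in Hg. destruct Hg as [s' Hs'].
          apply imply_to_and in Hs'. destruct Hs' as [Hs'1 Hs'2]. apply Rnot_lt_le in Hs'2.
          set (F := fun u => g u - h).
          assert (HFc : continuity F) by (apply continuity_minus; auto; apply continuity_const; intros ? ?; auto).
          assert (Hz : exists z, INR k * dl <= z <= (INR k + 1) * dl /\ F z = 0).
          assert (HF1 : F s' <= 0) by (unfold F; lra). assert (HF2 : 0 <= F t) by (unfold F, g; lra).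
          { destruct (Rle_dec s' t).
            - destruct (IVT_cor F s' t HFc r) as [z [Hz1 Hz2]]. nra. exists z; split; auto; lra.
            - destruct (IVT_cor F t s' HFc ltac:(lra)) as [z [Hz1 Hz2]]. nra. exists z; split; auto; lra. }
          destruct Hz as [z [Hz1 Hz2]].
          assert (In z Z) by (apply HZ; [eapply Hin; eauto | unfold F, g in Hz2; lra]).
          destruct (In_nth Z z 0 H) as [i [Hi Hnth]].
          exists (M + i)%nat. split; [lia|]. unfold a, b. destruct (Nat.ltb_spec (M + i) M); [lia|].
          replace (M + i - M)%nat with i by lia. rewrite Hnth. lra. }
    pose proof (mes_le_cover _ _ _ Hs Hc).
    rewrite fsum_add in H.
    replace (fsum M (fun n => b n - a n)) with G in H.
    2: { unfold G. apply fsum_ext. intros n Hn. unfold a, b, dec. destruct (Nat.ltb_spec n M); [|lia].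
         destruct excluded_middle_informative; ring. }
    replace (fsum (length Z) (fun i => b (M + i)%nat - a (M + i)%nat)) with (fsum (length Z) (fun _ => 2 * dl)) in H.
    2: { apply fsum_ext. intros i _. unfold a, b. destruct (Nat.ltb_spec (M + i) M); [lia|]. ring. }
    rewrite fsum_const in H. lra. }
  assert (Hb : G <= d).
  { destruct (margin_exists g good h dl M Hgc) as [mu [Hmu Hmarg]]; auto.
    destruct (mes_K good dl M Hdl) as [muK [HmuK HGK]]. fold G in HGK.
    destruct (fsum_cv m psi phis Hcv (mu / 2 ^ m)) as [N HN].
    { apply Rdiv_lt_0_compat; auto. apply pow_lt; lra. }
    assert (Hsub : forall n, (N <= n)%nat -> muK <= x n).
    { intros n Hn. eapply mes_mono; [| apply HmuK | apply Hx].
      intros t [k [Hk [Hgk Ht]]]. split; [eapply Hin; eauto|].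
      pose proof (Hmarg k Hk Hgk t Ht). unfold g in H.
      pose proof (gm_lip m (psi n) phis t). specialize (HN n Hn).
      assert (2 ^ m * fsum m (fun j => Rabs (psi n j - phis j)) < mu).
      { pose proof (pow_lt 2 m ltac:(lra)). apply (Rmult_lt_compat_l (2 ^ m)) in HN; auto.
        replace (2 ^ m * (mu / 2 ^ m)) with mu in HN by (field; lra). lra. }
      pose proof (Rabs_triang_inv (gm m phis t) (gm m phis t - gm m (psi n) t)) as Htr.
      replace (gm m phis t - (gm m phis t - gm m (psi n) t)) with (gm m (psi n) t) in Htr by ring.
      rewrite Rabs_minus_sym in Htr. lra. }
    apply Rnot_lt_le. intro HGd.
    destruct (archimed_cor1 (G - d)) as [K [HK HK0]]; [lra|].
    set (n := Nat.max N K). specialize (Hsub n ltac:(unfold n; lia)). specialize (Hxd n).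
    assert (/ INR (S n) <= / INR K). { apply Rinv_le_contravar. apply lt_0_INR; lia. apply le_INR; unfold n; lia. }
    lra. }
  fold dl. lra.
Qed.

Lemma superlevel_ext : forall m phi psi h, (forall t, Rabs (gm m psi t) = Rabs (gm m phi t)) ->
  forall t, superlevel m phi h t <-> superlevel m psi h t.
Proof. intros. unfold superlevel. rewrite H. tauto. Qed.

Lemma superlevel_mes : forall m phi h, exists x, mes_is (superlevel m phi h) x.
Proof. intros. apply (mes_bounded _ 0 (2 * PI)). pose proof PI_RGT_0; lra. intros t [Ht _]; auto. Qed.

Lemma superlevel_cov : forall m phi h, exists l, cover_length (superlevel m phi h) l.
Proof. intros. exists (2 * PI - 0). apply cover_bounded. pose proof PI_RGT_0; lra. intros t [Ht _]; lra. Qed.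

Lemma attain_pos : forall m h d, (1 <= m)%nat -> 0 < h ->
  is_inf (fun x => exists phi, mes_is (superlevel m phi h) x) d ->
  exists phi, mes_is (superlevel m phi h) d.
Proof. intros m h d Hm Hh Hinf. pose proof PI_RGT_0 as HPI.
  assert (Hstep : forall n, exists p : (nat -> R) * R, (forall j, (j < m)%nat -> 0 <= fst p j <= 2 * PI) /\
     mes_is (superlevel m (fst p) h) (snd p) /\ snd p < d + / INR (S n)).
  { intro n. assert (He : 0 < / INR (S n)) by (apply Rinv_0_lt_compat, lt_0_INR; lia).
    destruct (classic (exists x phi, mes_is (superlevel m phi h) x /\ x < d + / INR (S n))) as [[x [phi [Hx1 Hx2]]]|Hn].
    - destruct (reduce_phi m phi) as [psi [Hpsi1 Hpsi2]]. exists (psi, x). simpl. split; auto. split; auto.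
      eapply mes_ext; [|apply Hx1]. apply superlevel_ext; auto.
    - exfalso. destruct Hinf as [_ H2]. assert (d + / INR (S n) <= d); [|lra].
      apply H2. intros y [phi Hy]. apply Rnot_lt_le. intro; apply Hn; eauto. }
  set (P := fun n => proj1_sig (constructive_indefinite_description _ (Hstep n))).
  assert (HP : forall n, (forall j, (j < m)%nat -> 0 <= fst (P n) j <= 2 * PI) /\
     mes_is (superlevel m (fst (P n)) h) (snd (P n)) /\ snd (P n) < d + / INR (S n)).
  { intro n. unfold P. destruct constructive_indefinite_description; auto. }
  destruct (bwm m (fun n => fst (P n)) 0 (2 * PI)) as [sg [phis [Hsg Hcv]]].
  { intros n j Hj. apply HP; auto. }
  destruct (level_finite m phis h Hm Hh) as [Z HZ].
  destruct (superlevel_mes m phis h) as [s Hs].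
  assert (Hg : forall M, (1 <= M)%nat -> s <= d + 2 * (2 * PI / INR M) * INR (length Z)).
  { intros M HM. apply (grid_bound m h phis (fun n => fst (P (sg n))) (fun n => snd (P (sg n))) d s Z M); auto.
    - intro n. apply HP.
    - intro n. destruct (HP (sg n)) as [_ [_ H]]. assert (/ INR (S (sg n)) <= / INR (S n)).
      { apply Rinv_le_contravar. apply lt_0_INR; lia. apply le_INR. pose proof (subseq_ge sg Hsg n). lia. }
      lra. }
  assert (Hds : d <= s) by (apply Hinf; eauto).
  assert (Hsd : s <= d).
  { apply Rnot_lt_le. intro Hlt. set (L := INR (length Z)). assert (HL : 0 <= L) by apply pos_INR.
    destruct (archimed_cor1 ((s - d) / (4 * PI * L + 1))) as [M [HM1 HM2]].
    { apply Rdiv_lt_0_compat; nra. }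
    specialize (Hg M ltac:(lia)). fold L in Hg.
    assert (0 < INR M) by (apply lt_0_INR; lia).
    assert (E : 2 * (2 * PI / INR M) * L = 4 * PI * L * / INR M) by (field; lra).
    assert (4 * PI * L * / INR M <= 4 * PI * L * ((s - d) / (4 * PI * L + 1))).
    { apply Rmult_le_compat_l; nra. }
    assert (4 * PI * L * ((s - d) / (4 * PI * L + 1)) < s - d).
    { apply (Rmult_lt_reg_r (4 * PI * L + 1)); [nra|]. unfold Rdiv.
      rewrite Rmult_assoc, (Rmult_assoc (s - d)), Rinv_l by nra. nra. }
    lra. }
  exists phis. replace d with s by lra. auto.
Qed.

Lemma inf_h : forall m h, exists d, is_inf (fun x => exists phi, mes_is (superlevel m phi h) x) d.
Proof. intros. apply inf_exists.
  - destruct (superlevel_mes m (fun _ => 0) h) as [x Hx]. eauto.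
  - intros x [phi Hx]. eapply mes_ge0; eauto. apply superlevel_cov.
Qed.

Lemma level0 : forall m phi, mes_is (superlevel m phi 0) (2 * PI).
Proof. intros. pose proof PI_RGT_0. replace (2 * PI) with (2 * PI - 0) by ring.
  eapply mes_ext; [|apply mes_interval; lra]. intro t. unfold superlevel. split.
  - intro H0; split; auto. apply Rabs_pos.
  - tauto.
Qed.

Lemma finite_null : forall (S : R -> Prop) Z, (forall t, S t -> In t Z) -> cover_length S 0.
Proof. intros S Z H. replace 0 with (fsum (length Z) (fun i => nth i Z 0 - nth i Z 0)).
  apply cover_finite. intros; lra. intros t Ht. destruct (In_nth Z t 0 (H t Ht)) as [i [Hi Hn]].
  exists i; split; auto; lra.
  rewrite (fsum_ext _ _ (fun _ => 0)), fsum_const; [ring| intros; ring].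
Qed.

Lemma cont_eps : forall f z eps, continuity_pt f z -> 0 < eps ->
  exists eta, 0 < eta /\ forall u, Rabs (u - z) < eta -> Rabs (f u - f z) < eps.
Proof. intros f z eps Hc Heps. destruct (Hc eps Heps) as [eta [Heta H]].
  exists eta; split; auto. intros u Hu. destruct (Req_dec u z) as [->|Hne].
  - rewrite Rminus_diag, Rabs_R0; auto.
  - apply (H u). split. split; [constructor | auto]. simpl. unfold R_dist. auto.
Qed.

Theorem lemma2 (m : nat) (hm : (1 <= m)%nat) :
  exists delta : R -> R,
    (forall h, 0 <= h <= 2 -> delta_is m h (delta h)) /\
    (forall h, 0 <= h <= 2 ->
       exists phi : nat -> R, mes_is (superlevel m phi h) (delta h)) /\
    delta 0 = 2 * PI /\ delta 2 = 0 /\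
    (forall h1 h2, 0 <= h1 -> h1 < h2 -> h2 <= 2 -> delta h2 < delta h1).
Proof.
  pose proof PI_RGT_0 as HPI.
  set (delta := fun h => proj1_sig (constructive_indefinite_description _ (inf_h m h))).
  assert (Hd : forall h, delta_is m h (delta h)).
  { intro h. unfold delta, delta_is. destruct constructive_indefinite_description; auto. }
  assert (Hd0 : delta 0 = 2 * PI).
  { destruct (Hd 0) as [H1 H2]. apply Rle_antisym.
    - apply H1. exists (fun _ => 0). apply level0.
    - apply H2. intros y [phi Hy]. rewrite (mes_unique _ _ _ Hy (level0 m phi)). lra. }
  assert (Hatt : forall h, 0 <= h -> exists phi, mes_is (superlevel m phi h) (delta h)).
  { intros h Hh. destruct (Rle_lt_or_eq_dec 0 h Hh) as [Hlt|<-].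
    - apply attain_pos; auto. apply Hd.
    - exists (fun _ => 0). rewrite Hd0. apply level0. }
  exists delta. split; [intros; apply Hd|]. split; [intros h [Hh _]; apply Hatt; auto|].
  split; [auto|]. split.
  -
    destruct (level_finite m (phi0 m) 2 hm ltac:(lra)) as [Z HZ].
    destruct (superlevel_mes m (phi0 m) 2) as [x Hx].
    assert (x <= 0).
    { eapply mes_le_cover; [apply Hx|]. apply (finite_null _ Z). intros t [Ht Hl].
      apply HZ; auto. pose proof (gm_phi0_bound m t hm). lra. }
    destruct (Hd 2) as [H1 H2]. apply Rle_antisym.
    + assert (delta 2 <= x) by (apply H1; eauto). lra.
    + apply H2. intros y [phi Hy]. eapply mes_ge0; eauto. apply superlevel_cov.
  - intros h1 h2 Hh1 H12 Hh2.
    destruct (Hatt h1 Hh1) as [phi1 Hphi1].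
    set (g := fun t => Rabs (gm m phi1 t)).
    assert (Hgc : continuity g) by apply gm_abs_cont.
    destruct (gm_zero m phi1 hm) as [t0 [Ht0 Hg0]].
    destruct (gm_max m phi1 hm) as [t1 [Ht1 Hg1]].
    set (h' := (h1 + h2) / 2).
    set (F := fun u => g u - h').
    assert (HFc : continuity F) by (apply continuity_minus; auto; apply continuity_const; intros ? ?; auto).
    assert (HF0 : F t0 < 0) by (unfold F, g, h'; rewrite Hg0, Rabs_R0; lra).
    assert (HF1 : 0 < F t1) by (unfold F, g, h'; lra).
    assert (Hz : exists z, 0 <= z <= 2 * PI /\ F z = 0).
    { destruct (Rle_dec t0 t1).
      - destruct (IVT_cor F t0 t1 HFc r) as [z [Hz1 Hz2]]. nra. exists z; split; auto; lra.
      - destruct (IVT_cor F t1 t0 HFc ltac:(lra)) as [z [Hz1 Hz2]]. nra. exists z; split; auto; lra. }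
    destruct Hz as [z [Hz Hfz]].
    destruct (cont_eps g z ((h2 - h1) / 2) (Hgc z) ltac:(lra)) as [eta [Heta Hcont]].
    assert (Hgz : g z = h') by (unfold F in Hfz; lra).
    set (p := Rmax 0 (z - eta / 2)). set (q := Rmin (2 * PI) (z + eta / 2)).
    assert (Hpq : p < q).
    { unfold p, q, Rmax, Rmin. repeat destruct Rle_dec; lra. }
    assert (HJ : forall u, p <= u <= q -> 0 <= u <= 2 * PI /\ h1 < g u < h2).
    { intros u Hu. assert (0 <= u <= 2 * PI /\ Rabs (u - z) < eta).
      { unfold p, q, Rmax, Rmin in Hu. split; [repeat destruct Rle_dec; lra|]. apply Rabs_def1; repeat destruct Rle_dec; lra. }
      destruct H as [H1 H2]. split; auto. specialize (Hcont u H2). rewrite Hgz in Hcont. apply Rabs_def2 in Hcont.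
      unfold h' in Hcont. lra. }
    set (S2 := superlevel m phi1 h2).
    set (A := fun t => S2 t /\ t <= p). set (B := fun t => S2 t /\ q <= t).
    set (J := fun t => p <= t <= q).
    destruct (superlevel_mes m phi1 h2) as [s2 Hs2]. fold S2 in Hs2.
    destruct (mes_bounded A 0 (2 * PI)) as [a Ha]. lra. intros t [[Ht _] _]; auto.
    destruct (mes_bounded B 0 (2 * PI)) as [b Hb]. lra. intros t [[Ht _] _]; auto.
    destruct (mes_bounded (fun t => J t \/ B t) 0 (2 * PI)) as [jb Hjb]. lra.
      { intros t [Ht|[[Ht _] _]]; auto. apply HJ in Ht; tauto. }
    destruct (mes_bounded (fun t => A t \/ (J t \/ B t)) 0 (2 * PI)) as [ajb Hajb]. lra.
      { intros t [[[Ht _] _]|[Ht|[[Ht _] _]]]; auto. apply HJ in Ht; tauto. }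
    assert (E1 : s2 <= a + b).
    { apply (mes_sub S2 A B); auto. intros t Ht. destruct (Rle_or_lt t p). left; split; auto.
      destruct (Rle_or_lt q t). right; split; auto.
      exfalso. destruct Ht as [_ Ht]. assert (p <= t <= q) by lra. apply HJ in H1. unfold g in H1. lra. }
    assert (E2 : (q - p) + b <= jb).
    { apply (mes_split J B q); auto. intros t Ht; unfold J in Ht; lra. intros t [_ Ht]; auto. apply mes_interval; lra. }
    assert (E3 : a + jb <= ajb).
    { apply (mes_split A (fun t => J t \/ B t) p); auto. intros t [_ Ht]; auto.
      intros t [Ht|[_ Ht]]; unfold J in Ht; lra. }
    assert (E4 : ajb <= delta h1).
    { apply (mes_mono (fun t => A t \/ (J t \/ B t)) (superlevel m phi1 h1) ajb (delta h1)); auto.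
      intros t [[[Ht1' Ht2'] _]|[Ht|[[Ht1' Ht2'] _]]].
      - split; auto. lra.
      - apply HJ in Ht. split; [tauto|]. unfold g in Ht. lra.
      - split; auto. lra. }
    assert (E5 : delta h2 <= s2) by (apply (Hd h2); eauto).
    lra.
Qed.
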